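(* Let $A=(a_\alpha)_{\alpha\in I_4^4}$ be a $4$-dimensional polystochastic matrix of order $4$. Then $\operatorname{per} A>0$.
   Context: For integers $d,n\ge 1$ let $I_n^d=\{(\alpha_1,\dots,\alpha_d):\alpha_i\in\{0,\dots,n-1\}\}$. A $d$-dimensional matrix of order $n$ is an array $A=(a_\alpha)_{\alpha\in I_n^d}$ of real numbers. A line of $A$ is a set of $n$ indices obtained by fixing $d-1$ of the coordinates and letting the remaining coordinate range over $\{0,\dots,n-1\}$. $A$ is polystochastic if $a_\alpha\ge 0$ for all $\alpha$ and $\sum_{\alpha\in l}a_\alpha=1$ for every line $l$. A diagonal of $A$ is a set $\{\alpha^1,\dots,\alpha^n\}$ of $n$ indices such that any two distinct indices $\alpha^i,\alpha^j$ differ in every coordinate. Writing $D(A)$ for the set of all diagonals, the permanent is $\operatorname{per}A=\sum_{p\in D(A)}\prod_{\alpha\in p}a_\alpha$. (Since $A$ is nonnegative, $\operatorname{per}A>0$ is equivalent to the existence of a diagonal all of whose entries are positive.) *)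

(* Defs.v *)
From HB Require Import structures.
From mathcomp Require Import all_boot all_order all_algebra.
Set Implicit Arguments. Unset Strict Implicit. Unset Printing Implicit Defensive.
Import Order.TTheory GRing.Theory Num.Theory.
Local Open Scope ring_scope.

Definition index (d n : nat) := {ffun 'I_d -> 'I_n}.

Definition mdmatrix (R : Type) (d n : nat) := index d n -> R.

Definition line (d n : nat) (k : 'I_d) (alpha : index d n) : {set index d n} :=
  [set beta : index d n | [forall j : 'I_d, (j != k) ==> (beta j == alpha j)]].

Definition polystochastic (R : numDomainType) (d n : nat) (A : mdmatrix R d n) : Prop :=
  (forall alpha, 0 <= A alpha) /\
  (forall (k : 'I_d) (alpha : index d n), \sum_(beta in line k alpha) A beta = 1).

Definition diagonal (d n : nat) (p : {set index d n}) : bool :=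
  (#|p| == n)%N &&
  [forall a in p, forall b in p, (a != b) ==> [forall j : 'I_d, a j != b j]].

Definition per (R : numDomainType) (d n : nat) (A : mdmatrix R d n) : R :=
  \sum_(p : {set index d n} | diagonal p) \prod_(alpha in p) A alpha.

(* Main.v *)
Require Import Defs.
From HB Require Import structures.
From mathcomp Require Import all_boot all_order all_algebra.
From mathcomp Require Import zify fingroup perm.
From Stdlib Require Import Lia.
Set Implicit Arguments. Unset Strict Implicit. Unset Printing Implicit Defensive.
Import Order.TTheory GRing.Theory Num.Theory.
Notation idx := Defs.index.
Local Open Scope ring_scope.
Section LRAT.
Variable V : eqType.
Definition lit := (bool * V)%type.
Definition negl (l : lit) : lit := (~~ l.1, l.2).

Fixpoint rup (db : seq (seq lit)) (asg : seq lit) (hs : seq nat) : bool :=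
  if hs is h :: hs' then
    if (h < size db)%N then
      match [seq l <- nth [::] db h | negl l \notin asg] with
      | [::] => true
      | [:: l] => rup db (l :: asg) hs'
      | _ => false
      end
    else false
  else false.

Fixpoint checkp (db : seq (seq lit)) (ls : seq (seq lit * seq nat)) : bool :=
  if ls is (C, hs) :: rest then
    rup db (map negl C) hs && (if C is [::] then true else checkp (rcons db C) rest)
  else false.

Variable m : V -> bool.
Definition litv (l : lit) := m l.2 == l.1.

Lemma litv_neg l : litv (negl l) = ~~ litv l.
Proof. by case: l => b v; rewrite /litv /=; case: (m v); case: b. Qed.

Lemma rup_sound db asg hs :
  all (fun C => has litv C) db -> all litv asg -> rup db asg hs -> False.
Proof.
elim: hs asg => [//|h hs IH] asg Hdb Hasg /=.
case: ifP => // hlt.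
have HD : has litv (nth [::] db h) by apply: (all_nthP [::] Hdb).
have HD' : has litv [seq l <- nth [::] db h | negl l \notin asg].
  case/hasP: HD => l Hl Hv; apply/hasP; exists l => //.
  rewrite mem_filter Hl andbT; apply/negP => Hn.
  by move/allP: Hasg => /(_ _ Hn); rewrite litv_neg Hv.
case E: [seq l <- nth [::] db h | negl l \notin asg] HD' => [|l [|l2 ls]] //=.
rewrite orbF => Hl Hr; apply: (IH _ Hdb _ Hr) => /=.
by rewrite Hl Hasg.
Qed.

Lemma checkp_sound db ls : all (fun C => has litv C) db -> checkp db ls -> False.
Proof.
elim: ls db => [//|[C hs] ls IH] db Hdb /= /andP [Hr Hc].
have HC : has litv C.
  apply/negPn/negP => Hn; apply: (rup_sound Hdb _ Hr).
  apply/allP => l /mapP [l' Hl' ->]; rewrite litv_neg.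
  by apply: contra Hn => ?; apply/hasP; exists l'.
case: C Hc HC {Hr} => [//|l C] Hc HC.
by apply: (IH _ _ Hc); rewrite all_rcons HC Hdb.
Qed.
End LRAT.
Definition upd d n (a : idx d n) (k : 'I_d) (t : 'I_n) : idx d n :=
  [ffun i => if i == k then t else a i].

Lemma line_upd d n (k : 'I_d) (a : idx d n) : line k a = [set upd a k t | t : 'I_n].
Proof.
apply/setP => b; rewrite inE; apply/forallP/imsetP.
  move=> H; exists (b k) => //; apply/ffunP => i; rewrite ffunE.
  by case: eqP => [->|/eqP ne] //; move: (H i); rewrite ne => /eqP.
move=> [t _ ->] j; rewrite ffunE; apply/implyP => /negbTE -> //.
Qed.

Lemma sum_line (R : numDomainType) d n (k : 'I_d) (a : idx d n) (F : idx d n -> R) :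
  \sum_(b in line k a) F b = \sum_(t : 'I_n) F (upd a k t).
Proof.
rewrite line_upd big_imset /=; first by apply: eq_bigl => t.
by move=> t1 t2 _ _ /= /ffunP /(_ k); rewrite !ffunE eqxx.
Qed.

Lemma upd_comm d n (a : idx d n) j k u v : j != k ->
  upd (upd a j u) k v = upd (upd a k v) j u.
Proof.
move=> ne; apply/ffunP => i; rewrite !ffunE.
case: (eqVneq i k) => [->|nik]; first by rewrite eq_sym (negbTE ne).
by case: (eqVneq i j).
Qed.

Lemma upd_same d n (a : idx d n) k : upd a k (a k) = a.
Proof. by apply/ffunP => i; rewrite ffunE; case: eqP => [->|]. Qed.

Lemma mass2 (R : realFieldType) (f : 'I_4 -> 'I_4 -> R) (P Q : {pred 'I_4}) u0 v0 :
  (forall u v, 0 <= f u v) -> (forall u, \sum_v f u v = 1) -> (forall v, \sum_u f u v = 1) ->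
  (#|P| + #|Q| = 4)%N -> u0 \notin P -> v0 \notin Q -> 0 < f u0 v0 ->
  exists u v, [/\ u \in P, v \in Q & 0 < f u v].
Proof.
move=> f0 Hr Hc Hcard Hu Hv Hpos.
case: (pickP (fun uv : 'I_4 * 'I_4 => [&& uv.1 \in P, uv.2 \in Q & 0 < f uv.1 uv.2])).
  by move=> [u v] /and3P [Pu Qv hp]; exists u, v.
move=> H.
have Z : forall u v, u \in P -> v \in Q -> f u v = 0.
  move=> u v Pu Qv; apply/eqP; rewrite eq_le f0 andbT leNgt; apply/negP => hp.
  by move: (H (u, v)); rewrite /= Pu Qv hp.
have S1 : \sum_(u in P) \sum_(v | v \notin Q) f u v = (#|P|)%:R.
  rewrite -sumr_const; apply: eq_bigr => u Pu.
  rewrite -(Hr u) [RHS](bigID (fun v => v \in Q)) /= [X in _ = X + _]big1 ?add0r //.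
  by move=> v Qv; exact: Z.
have S2 : \sum_(v | v \notin Q) \sum_u f u v = (#|P|)%:R.
  rewrite (eq_bigr (fun _ => 1)) ?sumr_const; last by move=> v _; apply: Hc.
  congr (_%:R); move: (cardC Q); rewrite card_ord => h.
  rewrite (@eq_card _ _ [predC Q]) //.
  by apply/eqP; rewrite -(eqn_add2l #|Q|) h addnC Hcard.
move: S2; rewrite (eq_bigr (fun v => \sum_(u in P) f u v + \sum_(u | u \notin P) f u v)); last first.
  by move=> v _; rewrite (bigID (fun u => u \in P)).
rewrite exchange_big /= in S1.
rewrite big_split /= S1 => /eqP.
rewrite -subr_eq0 addrAC subrr add0r => /eqP S3.
have S4 : \sum_(u | u \notin P) f u v0 = 0.
  by apply: (psumr_eq0P _ S3) => // v _; exact: sumr_ge0.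
have := psumr_eq0P (fun u _ => f0 u v0) S4 Hu.
by move=> E; rewrite E ltxx in Hpos.
Qed.
Definition decode (c : seq nat) : idx 4 4 := [ffun k : 'I_4 => inord (nth 0%N c k)].

Lemma decode_set (s : seq nat) (k t : 'I_4) :
  decode (set_nth 0%N s k t) = upd (decode s) k t.
Proof.
apply/ffunP => i; rewrite !ffunE nth_set_nth /=.
case: (eqVneq i k) => [->|ne]; first by rewrite !eqxx inord_val.
have ne' : (nat_of_ord i == nat_of_ord k) = false by apply/negbTE.
by rewrite ne'.
Qed.

Lemma exists_pos4 (R : realFieldType) (F : 'I_4 -> R) :
  (forall t, 0 <= F t) -> \sum_t F t = 1 -> exists t, 0 < F t.
Proof.
move=> F0 S; case: (pickP (fun t => 0 < F t)) => [t ht|H]; first by exists t.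
suff : \sum_t F t = 0 by rewrite S => /eqP; rewrite oner_eq0.
apply: big1 => t _; apply/eqP; rewrite eq_le F0 andbT leNgt; apply/negP => h.
by move: (H t); rewrite h.
Qed.

Lemma card_valin (Rs : seq nat) : uniq Rs -> all (gtn 4) Rs ->
  #|[pred r : 'I_4 | nat_of_ord r \in Rs]| = size Rs.
Proof.
move=> U Hall; rewrite cardE -(size_map val).
apply: perm_size; apply: uniq_perm.
- by rewrite (map_inj_uniq val_inj) enum_uniq.
- exact: U.
move=> x; apply/mapP/idP => [[r] | xR].
  by rewrite mem_enum inE => ? ->.
have x4 : (x < 4)%N by move/allP: Hall => /(_ _ xR).
by exists (Ordinal x4); rewrite ?mem_enum ?inE.
Qed.

Lemma perm_nth_lt (l : seq nat) i : perm_eq l (iota 0 4) -> (i < 4)%N -> (nth 0%N l i < 4)%N.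
Proof.
move=> H hi; have sz : size l = 4%N by rewrite (perm_size H) size_iota.
have : nth 0%N l i \in l by apply: mem_nth; rewrite sz.
by rewrite (perm_mem H) mem_iota.
Qed.

Lemma perm_nth_inj (l : seq nat) i i' : perm_eq l (iota 0 4) -> (i < 4)%N -> (i' < 4)%N ->
  nth 0%N l i = nth 0%N l i' -> i = i'.
Proof.
move=> H hi hi' E; have sz : size l = 4%N by rewrite (perm_size H) size_iota.
have U : uniq l by rewrite (perm_uniq H) iota_uniq.
by apply/eqP; rewrite -(nth_uniq 0%N _ _ U) ?sz // E.
Qed.

Lemma iota4 (i : 'I_4) : (nat_of_ord i \in iota 0 4).
Proof. by rewrite mem_iota add0n ltn_ord. Qed.

Lemma inord4_inj (x y : nat) : (x < 4)%N -> (y < 4)%N -> (inord x : 'I_4) = inord y -> x = y.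
Proof. by move=> hx hy E; have := congr1 (@nat_of_ord 4) E; rewrite !inordK. Qed.

Inductive spec :=
| SLine of nat & seq nat
| SBirk of nat & nat & seq nat & seq nat & seq nat & nat & nat
| SDiag of seq nat & seq nat & seq nat
| SUnit of seq nat
| SB2 of seq nat & seq nat & nat & nat
| SU2 of seq nat
| SP of seq nat.

Definition pc (s : seq nat) (j k u v : nat) := set_nth 0%N (set_nth 0%N s j u) k v.

Definition units : seq (seq nat) :=
  flatten [seq [:: [:: i; i; 0; 0]; [:: 0; i; i; 0]; [:: 0; 0; i; i]]%N | i <- iota 0 4].

Definition birk_ok (Rs Cs : seq nat) (u v : nat) :=
  [&& [&& (u < 4)%N, (v < 4)%N, u \notin Rs & v \notin Cs],
      [&& uniq Rs, uniq Cs, all (gtn 4) Rs & all (gtn 4) Cs] & (size Rs + size Cs == 4)%N].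

Definition dc (l1 l2 l3 : seq nat) (i : nat) := [:: i; nth 0%N l1 i; nth 0%N l2 i; nth 0%N l3 i].

Definition main_clause (sp : spec) : option (seq (lit (seq nat))) :=
  match sp with
  | SLine k s => if (k < 4)%N then Some [seq (true, set_nth 0%N s k t) | t <- iota 0 4] else None
  | SBirk j k s Rs Cs u v =>
      if [&& (j < 4)%N, (k < 4)%N, j != k & birk_ok Rs Cs u v] then
        Some ((false, pc s j k u v) :: [seq (true, pc s j k r c) | r <- Rs, c <- Cs])
      else None
  | SDiag l1 l2 l3 =>
      if [&& perm_eq l1 (iota 0 4), perm_eq l2 (iota 0 4) & perm_eq l3 (iota 0 4)] then
        Some [seq (false, dc l1 l2 l3 i) | i <- iota 0 4]
      else None
  | SUnit c => if c \in units then Some [:: (true, c)] else None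
  | _ => None
  end.

Definition pdb (R : realFieldType) (A : mdmatrix R 4 4) : bool :=
  [exists p : {set idx 4 4}, diagonal p && [forall a in p, 0 < A a]].

Section MainSound.
Variables (R : realFieldType) (A : mdmatrix R 4 4).
Hypothesis HA : polystochastic A.
Hypothesis HU : forall c, c \in units -> 0 < A (decode c).
Hypothesis Hnd : ~~ pdb A.

Definition mA (c : seq nat) : bool := 0 < A (decode c).

Lemma A0 a : 0 <= A a. Proof. by case: HA. Qed.
Lemma Aline k a : \sum_(b in line k a) A b = 1. Proof. by case: HA. Qed.

Lemma line_sound k s C : (k < 4)%N -> C = [seq (true, set_nth 0%N s k t) | t <- iota 0 4] ->
  has (litv mA) C.
Proof.
move=> hk ->; set k' := Ordinal hk.
have := Aline k' (decode s); rewrite sum_line => S.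
case: (exists_pos4 (fun t => A0 _) S) => t ht.
apply/hasP; exists (true, set_nth 0%N s k t).
  by apply: (map_f (fun t0 : nat => (true, set_nth 0%N s k t0))); apply: iota4.
by rewrite /litv /mA /= eqb_id (decode_set s k' t).
Qed.

Lemma birk_sound j k s Rs Cs u v :
  (j < 4)%N -> (k < 4)%N -> j != k -> birk_ok Rs Cs u v ->
  has (litv mA) ((false, pc s j k u v) :: [seq (true, pc s j k r c) | r <- Rs, c <- Cs]).
Proof.
move=> hj hk njk /and3P [/and4P [hu hv uR vC] /and4P [URs UCs aR aC] sz].
set j' := Ordinal hj; set k' := Ordinal hk.
have njk' : j' != k' by [].
pose f (x y : 'I_4) := A (upd (upd (decode s) j' x) k' y).
have Ef (x y : 'I_4) : A (decode (pc s j k x y)) = f x y.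
  by rewrite /pc /f -(decode_set _ j' x) -(decode_set _ k' y).
rewrite /= /litv /=.
case E: (mA (pc s j k u v)) => //=.
have hu' : nat_of_ord (inord u : 'I_4) = u by rewrite inordK.
have hv' : nat_of_ord (inord v : 'I_4) = v by rewrite inordK.
have Hpos : 0 < f (inord u) (inord v) by rewrite -Ef hu' hv'.
have Hr x : \sum_y f x y = 1 by rewrite /f -sum_line Aline.
have Hc y : \sum_x f x y = 1.
  by rewrite /f (eq_bigr (fun x => A (upd (upd (decode s) k' y) j' x))) ?(sum_line) -?sum_line ?Aline //
     => x _; rewrite upd_comm.
have Hcard : (#|[pred r : 'I_4 | nat_of_ord r \in Rs]| + #|[pred c : 'I_4 | nat_of_ord c \in Cs]|)%N = 4%N.
  by rewrite !card_valin //; apply/eqP.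
have Pu : (inord u : 'I_4) \notin [pred r : 'I_4 | nat_of_ord r \in Rs] by rewrite inE hu'.
have Pv : (inord v : 'I_4) \notin [pred c : 'I_4 | nat_of_ord c \in Cs] by rewrite inE hv'.
case: (mass2 (fun x y => A0 _) Hr Hc Hcard Pu Pv Hpos) => r [c [Pr Pc hp]].
apply/hasP; exists (true, pc s j k r c).
  by apply/allpairsP; exists (val r, val c).
by rewrite /litv /mA /= eqb_id Ef.
Qed.

Lemma diag_sound l1 l2 l3 :
  perm_eq l1 (iota 0 4) -> perm_eq l2 (iota 0 4) -> perm_eq l3 (iota 0 4) ->
  has (litv mA) [seq (false, dc l1 l2 l3 i) | i <- iota 0 4].
Proof.
move=> H1 H2 H3; apply/negPn/negP => Hn.
have Hall (i : 'I_4) : 0 < A (decode (dc l1 l2 l3 i)).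
  apply/negPn/negP => h; apply: (negP Hn); apply/hasP; exists (false, dc l1 l2 l3 i).
    by apply: (map_f (fun i0 : nat => (false, dc l1 l2 l3 i0))); apply: iota4.
  by rewrite /litv /mA /= (negbTE h).
pose L (j : 'I_4) := nth [::] [:: iota 0 4; l1; l2; l3] j.
have HL j : perm_eq (L j) (iota 0 4).
  by case: j => [[|[|[|[|j]]]] hj]; rewrite /L /= ?perm_refl.
have EL (i j : 'I_4) : decode (dc l1 l2 l3 i) j = inord (nth 0%N (L j) i).
  rewrite /decode ffunE; case: j => [[|[|[|[|j]]]] hj] //=.
  by case: i => [[|[|[|[|i]]]] hi].
pose g (i : 'I_4) := decode (dc l1 l2 l3 i).
have gdiff (i i' : 'I_4) j : i != i' -> g i j != g i' j.
  move=> ne; apply/negP => /eqP E; move: ne; rewrite /g !EL in E.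
  move/inord4_inj: E => E.
  have := perm_nth_inj (HL j) (ltn_ord i) (ltn_ord i') (E (perm_nth_lt (HL j) (ltn_ord i)) (perm_nth_lt (HL j) (ltn_ord i'))).
  by move/val_inj => ->; rewrite eqxx.
have ginj : injective g.
  move=> i i' E; apply/eqP; apply/negPn/negP => ne.
  by have := gdiff i i' ord0 ne; rewrite E eqxx.
move/negP: Hnd; apply; apply/existsP; exists [set g i | i : 'I_4].
apply/andP; split; last first.
  by apply/forallP => a; apply/implyP => /imsetP [i _ ->]; apply: Hall.
apply/andP; split; first by rewrite card_imset // card_ord.
apply/forallP => a; apply/implyP => /imsetP [i _ ->].
apply/forallP => b; apply/implyP => /imsetP [i' _ ->].
apply/implyP => ne; apply/forallP => j; apply: gdiff.
by apply: contra ne => /eqP ->.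
Qed.

Lemma main_sound sp C : main_clause sp = Some C -> has (litv mA) C.
Proof.
case: sp => [k s|j k s Rs Cs u v|l1 l2 l3|c|?|?|?] //=.
- case: ifP => // hk [<-]; apply: (line_sound hk); reflexivity.
- case: ifP => // /and4P [hj hk njk hb] [<-].
  have := birk_sound s hj hk njk hb; congr has.
- case: ifP => // /and3P [h1 h2 h3] [<-].
  have := diag_sound h1 h2 h3; congr has.
- case: ifP => // hc [<-]; by rewrite /= /litv /mA /= eqb_id HU.
Qed.
End MainSound.
Definition cell_of (x : nat) : seq nat := [:: x %% 4; x %/ 4 %% 4; x %/ 16 %% 4; x %/ 64 %% 4]%N.
Definition litc (n : nat) : lit (seq nat) := (~~ odd n, cell_of n./2).
Definition main_inputs : seq spec := [::
  SUnit [:: 0; 1; 1; 0];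
  SUnit [:: 0; 0; 3; 3];
  SDiag [:: 1; 3; 2; 0] [:: 1; 0; 3; 2] [:: 0; 2; 1; 3];
  SDiag [:: 0; 3; 2; 1] [:: 3; 0; 1; 2] [:: 3; 2; 1; 0];
  SBirk 1 2 [:: 2; 0; 0; 1] [:: 2] [:: 0; 1; 3] 0 2;
  SUnit [:: 2; 2; 0; 0];
  SUnit [:: 3; 3; 0; 0];
  SBirk 2 3 [:: 2; 2; 0; 0] [:: 3] [:: 1; 2; 3] 0 0;
  SBirk 2 3 [:: 2; 2; 0; 0] [:: 1; 2; 3] [:: 3] 0 0;
  SBirk 0 1 [:: 0; 0; 3; 2] [:: 0] [:: 0; 1; 3] 2 2;
  SDiag [:: 0; 3; 2; 1] [:: 2; 1; 3; 0] [:: 1; 0; 2; 3];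
  SDiag [:: 3; 0; 2; 1] [:: 2; 1; 3; 0] [:: 1; 0; 2; 3];
  SDiag [:: 1; 0; 2; 3] [:: 3; 2; 1; 0] [:: 2; 1; 3; 0];
  SDiag [:: 1; 0; 2; 3] [:: 3; 1; 2; 0] [:: 2; 3; 1; 0];
  SBirk 0 1 [:: 0; 0; 2; 1] [:: 0; 1] [:: 0; 3] 2 2;
  SBirk 0 1 [:: 0; 0; 1; 3] [:: 0; 1; 3] [:: 0] 2 2;
  SDiag [:: 1; 3; 2; 0] [:: 3; 2; 0; 1] [:: 2; 1; 0; 3];
  SUnit [:: 0; 0; 0; 0];
  SUnit [:: 1; 1; 0; 0];
  SUnit [:: 0; 0; 1; 1];
  SUnit [:: 0; 0; 2; 2];
  SDiag [:: 0; 1; 2; 3] [:: 2; 0; 3; 1] [:: 2; 0; 3; 1];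
  SDiag [:: 0; 1; 2; 3] [:: 1; 2; 3; 0] [:: 1; 2; 3; 0];
  SBirk 0 3 [:: 0; 3; 1; 0] [:: 3] [:: 1; 2; 3] 1 0;
  SBirk 2 3 [:: 1; 1; 0; 0] [:: 1; 2; 3] [:: 2] 0 0;
  SDiag [:: 0; 1; 2; 3] [:: 0; 3; 2; 1] [:: 0; 2; 1; 3];
  SDiag [:: 3; 0; 2; 1] [:: 3; 1; 2; 0] [:: 2; 0; 1; 3];
  SDiag [:: 0; 3; 2; 1] [:: 1; 0; 2; 3] [:: 1; 2; 3; 0];
  SDiag [:: 0; 3; 2; 1] [:: 1; 0; 2; 3] [:: 3; 2; 1; 0];
  SBirk 0 3 [:: 0; 0; 1; 0] [:: 1] [:: 0; 2; 3] 0 1;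
  SDiag [:: 1; 0; 2; 3] [:: 2; 1; 3; 0] [:: 1; 3; 2; 0];
  SBirk 0 1 [:: 0; 0; 2; 1] [:: 0] [:: 0; 1; 3] 2 2;
  SDiag [:: 3; 1; 2; 0] [:: 2; 0; 1; 3] [:: 1; 0; 3; 2];
  SDiag [:: 3; 0; 2; 1] [:: 2; 1; 0; 3] [:: 1; 3; 0; 2];
  SBirk 0 1 [:: 0; 0; 3; 2] [:: 0; 3] [:: 0; 1] 2 2;
  SBirk 0 3 [:: 0; 1; 2; 0] [:: 0; 1; 2] [:: 1] 3 0;
  SDiag [:: 3; 1; 2; 0] [:: 3; 0; 1; 2] [:: 2; 0; 3; 1];
  SBirk 0 1 [:: 0; 0; 2; 1] [:: 0; 2; 3] [:: 0] 1 1;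
  SUnit [:: 0; 2; 2; 0];
  SDiag [:: 0; 3; 2; 1] [:: 2; 1; 3; 0] [:: 2; 0; 1; 3];
  SDiag [:: 0; 3; 2; 1] [:: 3; 1; 2; 0] [:: 2; 0; 1; 3];
  SBirk 0 2 [:: 0; 1; 0; 0] [:: 3] [:: 1; 2; 3] 1 0;
  SBirk 2 3 [:: 2; 2; 0; 0] [:: 1; 3] [:: 1; 3] 0 0;
  SBirk 1 3 [:: 1; 0; 1; 0] [:: 0] [:: 1; 2; 3] 3 0;
  SBirk 1 3 [:: 1; 0; 1; 0] [:: 0; 1] [:: 2; 3] 3 0;
  SDiag [:: 2; 0; 3; 1] [:: 2; 1; 3; 0] [:: 0; 1; 2; 3];
  SDiag [:: 0; 1; 2; 3] [:: 0; 1; 2; 3] [:: 0; 3; 1; 2];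
  SBirk 0 2 [:: 0; 3; 0; 2] [:: 0; 2; 3] [:: 3] 1 0;
  SBirk 2 3 [:: 2; 2; 0; 0] [:: 2; 3] [:: 2; 3] 0 0;
  SDiag [:: 0; 1; 2; 3] [:: 3; 1; 2; 0] [:: 3; 1; 2; 0];
  SDiag [:: 0; 1; 2; 3] [:: 1; 3; 2; 0] [:: 1; 3; 2; 0];
  SDiag [:: 0; 1; 2; 3] [:: 2; 1; 3; 0] [:: 2; 3; 1; 0];
  SBirk 2 3 [:: 1; 1; 0; 0] [:: 1; 3] [:: 1; 3] 0 0;
  SDiag [:: 0; 3; 2; 1] [:: 3; 0; 2; 1] [:: 3; 0; 1; 2];
  SBirk 2 3 [:: 3; 1; 0; 0] [:: 1; 3] [:: 0; 2] 0 3;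
  SBirk 2 3 [:: 3; 1; 0; 0] [:: 1] [:: 0; 1; 2] 0 3;
  SDiag [:: 0; 3; 2; 1] [:: 1; 2; 0; 3] [:: 1; 3; 0; 2];
  SDiag [:: 0; 3; 2; 1] [:: 0; 1; 2; 3] [:: 0; 3; 1; 2];
  SDiag [:: 0; 3; 2; 1] [:: 2; 3; 0; 1] [:: 2; 3; 0; 1];
  SBirk 2 3 [:: 1; 3; 0; 0] [:: 1; 2; 3] [:: 3] 0 0;
  SBirk 2 3 [:: 2; 2; 0; 0] [:: 3] [:: 0; 2; 3] 2 1;
  SDiag [:: 0; 3; 2; 1] [:: 1; 2; 3; 0] [:: 1; 2; 0; 3];
  SDiag [:: 3; 0; 2; 1] [:: 2; 1; 3; 0] [:: 2; 0; 1; 3];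
  SBirk 1 2 [:: 2; 0; 0; 1] [:: 0; 1; 3] [:: 2] 2 3;
  SBirk 1 3 [:: 1; 0; 1; 0] [:: 1] [:: 1; 2; 3] 0 0;
  SBirk 0 3 [:: 0; 3; 2; 0] [:: 0; 1; 3] [:: 2] 2 1;
  SDiag [:: 0; 1; 2; 3] [:: 3; 1; 0; 2] [:: 3; 1; 0; 2];
  SUnit [:: 0; 3; 3; 0];
  SDiag [:: 0; 3; 2; 1] [:: 1; 2; 3; 0] [:: 1; 0; 2; 3];
  SBirk 0 2 [:: 0; 3; 0; 0] [:: 1] [:: 0; 1; 2] 0 3;
  SBirk 0 2 [:: 0; 3; 0; 0] [:: 1] [:: 1; 2; 3] 3 0;
  SDiag [:: 0; 3; 2; 1] [:: 1; 3; 2; 0] [:: 1; 0; 2; 3];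
  SBirk 0 1 [:: 0; 0; 1; 2] [:: 3] [:: 0; 1; 3] 1 2;
  SDiag [:: 0; 3; 2; 1] [:: 3; 0; 2; 1] [:: 3; 2; 0; 1];
  SDiag [:: 1; 3; 2; 0] [:: 3; 0; 2; 1] [:: 3; 0; 1; 2];
  SDiag [:: 1; 3; 2; 0] [:: 0; 3; 2; 1] [:: 3; 0; 1; 2];
  SDiag [:: 0; 3; 2; 1] [:: 2; 0; 1; 3] [:: 1; 2; 3; 0];
  SBirk 0 3 [:: 0; 2; 2; 0] [:: 2] [:: 0; 2; 3] 0 1;
  SBirk 2 3 [:: 0; 1; 0; 0] [:: 0; 2; 3] [:: 3] 1 0;
  SBirk 1 3 [:: 0; 0; 2; 0] [:: 0; 2; 3] [:: 1] 1 3;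
  SBirk 1 2 [:: 1; 0; 0; 2] [:: 1] [:: 1; 2; 3] 3 0;
  SBirk 2 3 [:: 3; 3; 0; 0] [:: 1] [:: 1; 2; 3] 0 0;
  SDiag [:: 3; 0; 2; 1] [:: 3; 1; 2; 0] [:: 0; 2; 1; 3];
  SBirk 1 2 [:: 1; 0; 0; 2] [:: 0; 1; 2] [:: 1] 3 0;
  SDiag [:: 3; 2; 0; 1] [:: 3; 1; 2; 0] [:: 0; 2; 1; 3];
  SDiag [:: 0; 2; 1; 3] [:: 3; 1; 2; 0] [:: 3; 2; 1; 0];
  SBirk 1 2 [:: 1; 0; 0; 0] [:: 0; 2; 3] [:: 1] 1 0;
  SBirk 1 3 [:: 1; 0; 1; 0] [:: 0; 1; 3] [:: 2] 2 0;
  SDiag [:: 0; 2; 3; 1] [:: 2; 1; 3; 0] [:: 2; 0; 1; 3];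
  SDiag [:: 2; 3; 0; 1] [:: 2; 1; 3; 0] [:: 0; 2; 1; 3];
  SBirk 1 2 [:: 2; 0; 0; 1] [:: 0; 1; 3] [:: 3] 2 2;
  SDiag [:: 2; 3; 1; 0] [:: 2; 1; 3; 0] [:: 0; 2; 1; 3];
  SDiag [:: 2; 3; 1; 0] [:: 2; 0; 3; 1] [:: 0; 2; 1; 3];
  SBirk 2 3 [:: 3; 0; 0; 0] [:: 0; 1; 3] [:: 3] 2 0;
  SBirk 0 2 [:: 0; 0; 0; 3] [:: 3] [:: 0; 2; 3] 1 1;
  SBirk 2 3 [:: 3; 0; 0; 0] [:: 0; 1; 3] [:: 3] 2 1;
  SBirk 0 3 [:: 0; 0; 2; 0] [:: 2; 3] [:: 0; 1] 0 2;
  SBirk 0 2 [:: 0; 0; 0; 1] [:: 2; 3] [:: 2; 3] 0 1;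
  SDiag [:: 3; 2; 0; 1] [:: 3; 1; 2; 0] [:: 1; 2; 0; 3];
  SDiag [:: 2; 3; 0; 1] [:: 3; 1; 2; 0] [:: 1; 2; 0; 3];
  SBirk 0 1 [:: 0; 0; 3; 1] [:: 0; 2] [:: 2; 3] 3 0;
  SDiag [:: 0; 3; 2; 1] [:: 1; 0; 3; 2] [:: 1; 0; 2; 3];
  SBirk 2 3 [:: 3; 1; 0; 0] [:: 0; 1; 2] [:: 3] 3 0;
  SDiag [:: 0; 3; 2; 1] [:: 0; 2; 3; 1] [:: 0; 1; 2; 3];
  SDiag [:: 0; 3; 2; 1] [:: 0; 3; 2; 1] [:: 0; 2; 1; 3];
  SDiag [:: 0; 3; 2; 1] [:: 2; 3; 0; 1] [:: 2; 1; 0; 3];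
  SBirk 0 3 [:: 0; 3; 3; 0] [:: 1] [:: 1; 2; 3] 0 0;
  SBirk 1 2 [:: 1; 0; 0; 1] [:: 3] [:: 0; 2; 3] 1 1;
  SBirk 0 3 [:: 0; 1; 1; 0] [:: 1; 3] [:: 1; 2] 0 0;
  SBirk 0 3 [:: 0; 1; 0; 0] [:: 3] [:: 1; 2; 3] 1 0;
  SDiag [:: 0; 2; 3; 1] [:: 3; 1; 2; 0] [:: 3; 0; 1; 2];
  SDiag [:: 3; 0; 2; 1] [:: 3; 2; 1; 0] [:: 0; 1; 3; 2];
  SDiag [:: 3; 0; 2; 1] [:: 3; 1; 2; 0] [:: 0; 3; 1; 2];
  SBirk 0 1 [:: 0; 0; 2; 1] [:: 0; 1; 3] [:: 0] 2 2;
  SDiag [:: 3; 1; 2; 0] [:: 1; 0; 3; 2] [:: 3; 0; 2; 1];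
  SDiag [:: 1; 3; 2; 0] [:: 1; 0; 3; 2] [:: 0; 3; 2; 1];
  SDiag [:: 1; 3; 2; 0] [:: 0; 2; 3; 1] [:: 1; 0; 2; 3];
  SDiag [:: 3; 1; 2; 0] [:: 2; 0; 3; 1] [:: 1; 0; 2; 3];
  SBirk 1 3 [:: 0; 0; 1; 0] [:: 0; 2; 3] [:: 3] 1 0;
  SBirk 0 3 [:: 0; 3; 0; 0] [:: 1] [:: 0; 1; 3] 2 2;
  SBirk 0 3 [:: 0; 1; 0; 0] [:: 0; 2; 3] [:: 1] 1 0;
  SBirk 0 3 [:: 0; 1; 3; 0] [:: 0; 1; 2] [:: 1] 3 0;
  SBirk 0 1 [:: 0; 0; 2; 1] [:: 0; 1; 2] [:: 3] 3 0;
  SDiag [:: 2; 3; 0; 1] [:: 1; 2; 0; 3] [:: 3; 1; 2; 0];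
  SBirk 1 3 [:: 2; 0; 0; 0] [:: 0; 2; 3] [:: 2] 1 1;
  SDiag [:: 1; 3; 2; 0] [:: 3; 2; 0; 1] [:: 1; 0; 2; 3];
  SDiag [:: 0; 1; 2; 3] [:: 2; 3; 1; 0] [:: 2; 1; 3; 0];
  SDiag [:: 0; 3; 2; 1] [:: 2; 0; 1; 3] [:: 2; 1; 3; 0];
  SDiag [:: 0; 2; 3; 1] [:: 2; 1; 3; 0] [:: 2; 0; 3; 1];
  SDiag [:: 0; 2; 3; 1] [:: 3; 1; 2; 0] [:: 3; 0; 2; 1];
  SDiag [:: 0; 3; 2; 1] [:: 2; 3; 1; 0] [:: 2; 0; 3; 1];
  SBirk 0 1 [:: 0; 0; 3; 3] [:: 2] [:: 1; 2; 3] 0 0;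
  SBirk 1 2 [:: 1; 0; 0; 0] [:: 0; 3] [:: 1; 3] 1 0;
  SBirk 2 3 [:: 1; 3; 0; 0] [:: 0; 1; 3] [:: 0] 2 2;
  SBirk 1 2 [:: 1; 0; 0; 0] [:: 3] [:: 0; 1; 3] 2 2;
  SDiag [:: 0; 3; 1; 2] [:: 1; 0; 3; 2] [:: 1; 2; 3; 0];
  SDiag [:: 0; 2; 1; 3] [:: 1; 2; 3; 0] [:: 1; 2; 3; 0];
  SDiag [:: 3; 0; 2; 1] [:: 2; 3; 1; 0] [:: 2; 0; 3; 1];
  SBirk 0 1 [:: 0; 0; 2; 2] [:: 0; 1; 2] [:: 3] 3 2;
  SBirk 0 3 [:: 0; 2; 2; 0] [:: 1; 3] [:: 0; 2] 2 1;
  SDiag [:: 1; 3; 2; 0] [:: 3; 0; 1; 2] [:: 0; 2; 3; 1];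
  SBirk 0 2 [:: 0; 1; 0; 0] [:: 0; 2; 3] [:: 3] 1 0;
  SDiag [:: 0; 3; 1; 2] [:: 1; 0; 3; 2] [:: 1; 2; 0; 3];
  SBirk 1 3 [:: 3; 0; 2; 0] [:: 1; 2; 3] [:: 3] 0 1;
  SBirk 1 3 [:: 3; 0; 2; 0] [:: 0; 2; 3] [:: 3] 1 0;
  SDiag [:: 3; 0; 2; 1] [:: 3; 1; 0; 2] [:: 0; 2; 1; 3];
  SBirk 0 3 [:: 0; 0; 2; 0] [:: 0; 1; 2] [:: 1] 3 3;
  SDiag [:: 0; 1; 2; 3] [:: 2; 0; 3; 1] [:: 1; 0; 2; 3];
  SDiag [:: 0; 1; 2; 3] [:: 2; 1; 3; 0] [:: 1; 3; 2; 0];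
  SBirk 2 3 [:: 3; 3; 0; 0] [:: 1; 2] [:: 2; 3] 0 0;
  SBirk 0 3 [:: 0; 1; 1; 0] [:: 1] [:: 1; 2; 3] 0 0;
  SBirk 2 3 [:: 3; 1; 0; 0] [:: 0] [:: 1; 2; 3] 2 0;
  SBirk 0 3 [:: 0; 1; 1; 0] [:: 1; 2; 3] [:: 2] 0 0;
  SDiag [:: 0; 3; 1; 2] [:: 1; 0; 3; 2] [:: 1; 0; 3; 2];
  SDiag [:: 0; 2; 1; 3] [:: 3; 2; 1; 0] [:: 3; 1; 2; 0];
  SDiag [:: 0; 3; 1; 2] [:: 3; 0; 1; 2] [:: 3; 0; 2; 1];
  SBirk 0 3 [:: 0; 2; 2; 0] [:: 1; 3] [:: 1; 2] 0 0;
  SDiag [:: 0; 1; 2; 3] [:: 2; 0; 3; 1] [:: 2; 0; 1; 3];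
  SDiag [:: 0; 1; 2; 3] [:: 3; 2; 0; 1] [:: 3; 2; 0; 1];
  SBirk 2 3 [:: 1; 1; 0; 0] [:: 1; 2] [:: 2; 3] 0 0;
  SBirk 2 3 [:: 3; 3; 0; 0] [:: 1; 2; 3] [:: 2] 0 0;
  SDiag [:: 0; 1; 2; 3] [:: 1; 2; 0; 3] [:: 1; 3; 0; 2];
  SBirk 0 1 [:: 0; 0; 1; 0] [:: 1] [:: 0; 2; 3] 0 1;
  SDiag [:: 0; 3; 2; 1] [:: 2; 0; 1; 3] [:: 2; 0; 3; 1];
  SBirk 2 3 [:: 3; 1; 0; 0] [:: 1] [:: 0; 2; 3] 0 1;
  SDiag [:: 0; 3; 2; 1] [:: 3; 0; 2; 1] [:: 2; 0; 1; 3];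
  SDiag [:: 0; 3; 2; 1] [:: 3; 0; 2; 1] [:: 0; 2; 1; 3];
  SBirk 0 3 [:: 0; 0; 3; 0] [:: 0] [:: 0; 1; 2] 2 3;
  SBirk 0 3 [:: 0; 3; 3; 0] [:: 1] [:: 0; 1; 2] 2 3;
  SBirk 0 3 [:: 0; 3; 3; 0] [:: 1; 3] [:: 1; 2] 0 0;
  SBirk 0 1 [:: 0; 0; 3; 3] [:: 2] [:: 0; 2; 3] 3 1;
  SBirk 1 3 [:: 3; 0; 3; 0] [:: 1] [:: 0; 1; 3] 3 2;
  SBirk 2 3 [:: 1; 3; 0; 0] [:: 0; 3] [:: 0; 3] 2 2;
  SDiag [:: 0; 3; 2; 1] [:: 3; 2; 0; 1] [:: 3; 2; 0; 1];
  SDiag [:: 0; 3; 2; 1] [:: 1; 2; 0; 3] [:: 1; 2; 0; 3];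
  SBirk 2 3 [:: 1; 3; 0; 0] [:: 0] [:: 0; 1; 3] 2 2;
  SDiag [:: 0; 3; 2; 1] [:: 0; 3; 2; 1] [:: 0; 3; 1; 2];
  SBirk 0 1 [:: 0; 0; 3; 3] [:: 3] [:: 0; 1; 2] 1 3;
  SBirk 1 3 [:: 3; 0; 1; 0] [:: 1] [:: 0; 1; 2] 0 3;
  SBirk 1 3 [:: 3; 0; 1; 0] [:: 1] [:: 0; 1; 2] 3 3;
  SDiag [:: 1; 3; 2; 0] [:: 1; 0; 3; 2] [:: 0; 1; 2; 3];
  SBirk 1 2 [:: 3; 0; 0; 3] [:: 0; 3] [:: 1; 2] 2 3;
  SBirk 2 3 [:: 1; 3; 0; 0] [:: 2; 3] [:: 1; 2] 1 0;
  SBirk 2 3 [:: 3; 1; 0; 0] [:: 0; 1] [:: 2; 3] 2 0;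
  SDiag [:: 0; 3; 2; 1] [:: 3; 2; 0; 1] [:: 3; 1; 0; 2];
  SBirk 2 3 [:: 1; 3; 0; 0] [:: 2] [:: 1; 2; 3] 1 0;
  SDiag [:: 0; 3; 2; 1] [:: 1; 2; 3; 0] [:: 1; 3; 2; 0];
  SBirk 2 3 [:: 3; 1; 0; 0] [:: 0] [:: 0; 2; 3] 3 1;
  SBirk 1 3 [:: 3; 0; 3; 0] [:: 1] [:: 0; 1; 2] 3 3;
  SBirk 0 3 [:: 0; 1; 3; 0] [:: 3] [:: 0; 1; 2] 1 3;
  SBirk 2 3 [:: 3; 3; 0; 0] [:: 1; 2; 3] [:: 3] 0 0;
  SBirk 2 3 [:: 1; 1; 0; 0] [:: 2; 3] [:: 1; 3] 0 0;
  SDiag [:: 0; 1; 2; 3] [:: 0; 2; 3; 1] [:: 0; 1; 2; 3];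
  SDiag [:: 0; 3; 2; 1] [:: 3; 1; 2; 0] [:: 3; 0; 1; 2];
  SDiag [:: 0; 3; 2; 1] [:: 2; 1; 3; 0] [:: 3; 0; 2; 1];
  SDiag [:: 3; 0; 2; 1] [:: 2; 1; 3; 0] [:: 3; 0; 2; 1];
  SBirk 1 3 [:: 0; 0; 2; 0] [:: 0; 3] [:: 1; 3] 2 0;
  SBirk 1 2 [:: 1; 0; 0; 0] [:: 3] [:: 0; 2; 3] 0 1;
  SDiag [:: 0; 3; 2; 1] [:: 3; 2; 1; 0] [:: 2; 0; 3; 1];
  SDiag [:: 0; 3; 2; 1] [:: 1; 2; 3; 0] [:: 3; 0; 2; 1];
  SBirk 0 1 [:: 0; 0; 3; 2] [:: 0; 1; 3] [:: 0] 2 2;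
  SBirk 0 1 [:: 0; 0; 1; 3] [:: 0; 3] [:: 0; 1] 2 2;
  SDiag [:: 1; 0; 2; 3] [:: 1; 3; 2; 0] [:: 3; 2; 1; 0];
  SBirk 0 2 [:: 0; 3; 0; 0] [:: 1] [:: 0; 1; 3] 0 2;
  SBirk 2 3 [:: 1; 3; 0; 0] [:: 0; 1; 3] [:: 0] 2 3;
  SBirk 0 3 [:: 0; 3; 2; 0] [:: 0; 2; 3] [:: 3] 1 0;
  SBirk 1 3 [:: 0; 0; 2; 0] [:: 3] [:: 0; 1; 3] 0 2;
  SBirk 0 3 [:: 0; 3; 2; 0] [:: 1; 3] [:: 2; 3] 0 1;
  SDiag [:: 0; 1; 3; 2] [:: 1; 0; 2; 3] [:: 1; 0; 3; 2];
  SDiag [:: 2; 0; 3; 1] [:: 3; 1; 2; 0] [:: 2; 0; 3; 1];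
  SDiag [:: 0; 1; 2; 3] [:: 1; 3; 0; 2] [:: 1; 3; 0; 2];
  SBirk 0 1 [:: 0; 0; 3; 2] [:: 0; 3] [:: 0; 2] 1 1;
  SBirk 2 3 [:: 1; 1; 0; 0] [:: 3] [:: 1; 2; 3] 0 0;
  SDiag [:: 3; 2; 1; 0] [:: 3; 1; 0; 2] [:: 0; 2; 3; 1];
  SBirk 0 3 [:: 0; 1; 0; 0] [:: 2; 3] [:: 1; 3] 1 0;
  SDiag [:: 3; 2; 1; 0] [:: 3; 1; 0; 2] [:: 0; 2; 1; 3];
  SBirk 1 2 [:: 3; 0; 0; 0] [:: 1] [:: 1; 2; 3] 3 0;
  SDiag [:: 0; 3; 2; 1] [:: 1; 0; 3; 2] [:: 1; 3; 2; 0];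
  SDiag [:: 0; 3; 2; 1] [:: 3; 0; 1; 2] [:: 1; 2; 3; 0];
  SDiag [:: 0; 1; 2; 3] [:: 2; 0; 1; 3] [:: 2; 0; 3; 1];
  SBirk 0 1 [:: 0; 0; 1; 3] [:: 0; 1] [:: 0; 3] 2 2;
  SBirk 1 3 [:: 0; 0; 2; 0] [:: 0; 1; 3] [:: 1] 2 0;
  SDiag [:: 0; 3; 2; 1] [:: 2; 1; 0; 3] [:: 2; 3; 0; 1];
  SBirk 0 2 [:: 0; 1; 0; 1] [:: 1; 2; 3] [:: 3] 0 2;
  SBirk 1 2 [:: 1; 0; 0; 0] [:: 3] [:: 0; 1; 3] 0 2;
  SLine 2 [:: 1; 3; 0; 0];
  SBirk 1 2 [:: 1; 0; 0; 0] [:: 0; 2] [:: 1; 2] 1 0;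
  SBirk 1 3 [:: 1; 0; 0; 0] [:: 3] [:: 0; 1; 3] 0 2;
  SBirk 2 3 [:: 1; 3; 0; 0] [:: 0] [:: 0; 1; 3] 3 2;
  SBirk 2 3 [:: 3; 1; 0; 0] [:: 0; 1] [:: 2; 3] 3 0;
  SDiag [:: 3; 0; 2; 1] [:: 3; 0; 2; 1] [:: 0; 3; 1; 2];
  SDiag [:: 0; 3; 2; 1] [:: 1; 0; 3; 2] [:: 1; 2; 0; 3];
  SBirk 0 3 [:: 0; 0; 0; 0] [:: 1] [:: 1; 2; 3] 0 0;
  SBirk 1 3 [:: 2; 0; 3; 0] [:: 2] [:: 0; 1; 3] 3 2;
  SDiag [:: 2; 0; 3; 1] [:: 2; 0; 3; 1] [:: 0; 1; 3; 2];
  SBirk 0 3 [:: 0; 3; 3; 0] [:: 1; 2] [:: 2; 3] 0 0;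
  SDiag [:: 0; 3; 2; 1] [:: 3; 0; 2; 1] [:: 3; 2; 1; 0];
  SDiag [:: 1; 3; 2; 0] [:: 1; 0; 2; 3] [:: 0; 2; 1; 3];
  SDiag [:: 0; 1; 2; 3] [:: 3; 1; 2; 0] [:: 3; 2; 1; 0];
  SDiag [:: 0; 1; 2; 3] [:: 3; 0; 2; 1] [:: 3; 0; 1; 2];
  SDiag [:: 0; 1; 2; 3] [:: 1; 2; 3; 0] [:: 1; 3; 2; 0];
  SDiag [:: 0; 1; 2; 3] [:: 1; 0; 3; 2] [:: 1; 0; 2; 3];
  SDiag [:: 1; 3; 2; 0] [:: 1; 0; 2; 3] [:: 0; 3; 1; 2];
  SBirk 1 3 [:: 3; 0; 3; 0] [:: 0] [:: 1; 2; 3] 1 0;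
  SDiag [:: 1; 0; 2; 3] [:: 1; 2; 3; 0] [:: 3; 1; 2; 0];
  SDiag [:: 3; 0; 2; 1] [:: 0; 2; 1; 3] [:: 2; 1; 3; 0];
  SDiag [:: 3; 1; 2; 0] [:: 2; 0; 1; 3] [:: 2; 0; 3; 1];
  SDiag [:: 1; 3; 2; 0] [:: 2; 0; 1; 3] [:: 0; 2; 3; 1];
  SBirk 2 3 [:: 0; 3; 0; 0] [:: 0; 1; 2] [:: 2] 3 0;
  SBirk 0 2 [:: 0; 1; 0; 0] [:: 0; 2; 3] [:: 2] 1 0;
  SBirk 1 3 [:: 0; 0; 1; 0] [:: 0; 1; 2] [:: 3] 3 2;
  SDiag [:: 2; 3; 1; 0] [:: 1; 0; 2; 3] [:: 3; 2; 0; 1];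
  SBirk 0 3 [:: 0; 2; 2; 0] [:: 2] [:: 1; 2; 3] 0 0;
  SDiag [:: 0; 1; 2; 3] [:: 3; 0; 2; 1] [:: 3; 0; 2; 1];
  SBirk 2 3 [:: 3; 3; 0; 0] [:: 1; 2; 3] [:: 1] 0 0;
  SBirk 0 3 [:: 0; 1; 3; 0] [:: 1] [:: 1; 2; 3] 3 0;
  SDiag [:: 0; 1; 2; 3] [:: 0; 3; 1; 2] [:: 0; 2; 3; 1];
  SBirk 2 3 [:: 2; 2; 0; 0] [:: 2; 3] [:: 1; 3] 0 0;
  SBirk 2 3 [:: 2; 2; 0; 0] [:: 1; 2; 3] [:: 1] 0 0;
  SDiag [:: 0; 1; 2; 3] [:: 1; 0; 2; 3] [:: 1; 0; 3; 2];
  SDiag [:: 0; 1; 2; 3] [:: 2; 0; 1; 3] [:: 2; 0; 1; 3];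
  SBirk 0 3 [:: 0; 3; 3; 0] [:: 3] [:: 1; 2; 3] 0 0;
  SDiag [:: 0; 1; 2; 3] [:: 2; 1; 3; 0] [:: 2; 1; 3; 0];
  SDiag [:: 0; 1; 2; 3] [:: 2; 3; 1; 0] [:: 2; 3; 1; 0];
  SDiag [:: 0; 1; 2; 3] [:: 0; 1; 3; 2] [:: 0; 3; 2; 1];
  SBirk 2 3 [:: 1; 1; 0; 0] [:: 1; 2; 3] [:: 3] 0 0;
  SDiag [:: 0; 1; 2; 3] [:: 2; 1; 0; 3] [:: 2; 1; 0; 3];
  SBirk 2 3 [:: 2; 2; 0; 0] [:: 1; 2] [:: 1; 2] 0 0;
  SBirk 2 3 [:: 1; 1; 0; 0] [:: 1; 2] [:: 1; 3] 0 0;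
  SDiag [:: 0; 1; 2; 3] [:: 0; 2; 1; 3] [:: 0; 1; 2; 3];
  SDiag [:: 0; 3; 2; 1] [:: 1; 0; 3; 2] [:: 1; 2; 3; 0];
  SBirk 0 2 [:: 0; 1; 0; 0] [:: 3] [:: 0; 2; 3] 0 1;
  SBirk 2 3 [:: 1; 1; 0; 0] [:: 1; 2; 3] [:: 1] 0 0;
  SDiag [:: 0; 3; 2; 1] [:: 2; 1; 3; 0] [:: 2; 1; 3; 0];
  SDiag [:: 0; 3; 2; 1] [:: 2; 3; 1; 0] [:: 2; 1; 3; 0];
  SDiag [:: 0; 3; 2; 1] [:: 2; 0; 3; 1] [:: 2; 1; 3; 0];
  SBirk 1 2 [:: 1; 0; 0; 1] [:: 3] [:: 0; 1; 3] 1 2;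
  SDiag [:: 0; 1; 2; 3] [:: 1; 3; 2; 0] [:: 1; 2; 3; 0];
  SBirk 2 3 [:: 3; 3; 0; 0] [:: 3] [:: 1; 2; 3] 0 0;
  SDiag [:: 0; 1; 2; 3] [:: 2; 3; 0; 1] [:: 2; 3; 0; 1];
  SDiag [:: 0; 1; 2; 3] [:: 1; 2; 0; 3] [:: 1; 2; 0; 3];
  SBirk 2 3 [:: 3; 3; 0; 0] [:: 1; 3] [:: 1; 2] 0 0;
  SBirk 2 3 [:: 1; 1; 0; 0] [:: 2; 3] [:: 1; 2] 0 0;
  SDiag [:: 0; 1; 2; 3] [:: 3; 2; 0; 1] [:: 3; 1; 0; 2];
  SBirk 2 3 [:: 3; 3; 0; 0] [:: 1; 3] [:: 2; 3] 0 0;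
  SDiag [:: 0; 1; 2; 3] [:: 2; 0; 3; 1] [:: 3; 0; 1; 2];
  SDiag [:: 0; 1; 2; 3] [:: 1; 0; 2; 3] [:: 2; 0; 3; 1];
  SBirk 0 1 [:: 0; 0; 2; 3] [:: 0; 1; 3] [:: 0] 2 2;
  SDiag [:: 1; 0; 2; 3] [:: 1; 2; 3; 0] [:: 0; 3; 1; 2];
  SDiag [:: 1; 0; 2; 3] [:: 1; 2; 3; 0] [:: 2; 3; 1; 0];
  SBirk 0 2 [:: 0; 3; 0; 2] [:: 3] [:: 0; 2; 3] 0 1;
  SBirk 0 1 [:: 0; 0; 1; 2] [:: 0] [:: 0; 1; 3] 2 2;
  SBirk 2 3 [:: 2; 2; 0; 0] [:: 1; 3] [:: 2; 3] 0 0;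
  SDiag [:: 0; 1; 2; 3] [:: 3; 2; 1; 0] [:: 3; 1; 2; 0];
  SDiag [:: 0; 1; 2; 3] [:: 0; 3; 2; 1] [:: 0; 1; 3; 2];
  SDiag [:: 0; 1; 2; 3] [:: 2; 3; 1; 0] [:: 3; 1; 2; 0];
  SDiag [:: 1; 0; 2; 3] [:: 3; 2; 0; 1] [:: 2; 3; 0; 1];
  SDiag [:: 0; 1; 2; 3] [:: 3; 0; 2; 1] [:: 2; 0; 3; 1];
  SDiag [:: 0; 1; 2; 3] [:: 3; 1; 2; 0] [:: 1; 2; 3; 0];
  SDiag [:: 1; 0; 2; 3] [:: 3; 2; 1; 0] [:: 1; 3; 2; 0];
  SBirk 1 3 [:: 0; 0; 3; 0] [:: 0; 1] [:: 1; 2] 3 0;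
  SDiag [:: 0; 1; 2; 3] [:: 2; 3; 0; 1] [:: 2; 1; 0; 3];
  SBirk 2 3 [:: 1; 1; 0; 0] [:: 2; 3] [:: 2; 3] 0 0;
  SDiag [:: 0; 1; 2; 3] [:: 2; 1; 0; 3] [:: 2; 3; 0; 1];
  SDiag [:: 0; 1; 2; 3] [:: 0; 1; 2; 3] [:: 0; 2; 3; 1];
  SBirk 2 3 [:: 3; 3; 0; 0] [:: 2; 3] [:: 2; 3] 0 0;
  SBirk 2 3 [:: 2; 2; 0; 0] [:: 1] [:: 1; 2; 3] 0 0;
  SBirk 0 2 [:: 0; 3; 0; 2] [:: 3] [:: 1; 2; 3] 1 0;
  SDiag [:: 0; 1; 2; 3] [:: 1; 2; 0; 3] [:: 3; 1; 0; 2];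
  SDiag [:: 0; 1; 2; 3] [:: 0; 2; 1; 3] [:: 0; 3; 1; 2];
  SBirk 2 3 [:: 2; 2; 0; 0] [:: 1; 2; 3] [:: 2] 0 0;
  SDiag [:: 0; 1; 2; 3] [:: 2; 3; 0; 1] [:: 1; 2; 0; 3];
  SDiag [:: 3; 1; 2; 0] [:: 3; 1; 2; 0] [:: 0; 3; 2; 1];
  SBirk 0 2 [:: 0; 0; 0; 1] [:: 3] [:: 0; 2; 3] 0 1;
  SDiag [:: 2; 1; 0; 3] [:: 1; 3; 2; 0] [:: 3; 2; 1; 0];
  SDiag [:: 3; 1; 2; 0] [:: 1; 0; 2; 3] [:: 3; 0; 2; 1];
  SBirk 0 1 [:: 0; 0; 1; 3] [:: 0] [:: 0; 2; 3] 1 1;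
  SDiag [:: 0; 1; 2; 3] [:: 1; 0; 3; 2] [:: 1; 0; 3; 2];
  SDiag [:: 1; 3; 2; 0] [:: 1; 0; 3; 2] [:: 0; 2; 3; 1];
  SDiag [:: 0; 1; 2; 3] [:: 0; 2; 3; 1] [:: 0; 1; 3; 2];
  SDiag [:: 2; 1; 0; 3] [:: 2; 3; 0; 1] [:: 0; 1; 3; 2];
  SBirk 2 3 [:: 1; 1; 0; 0] [:: 1; 2] [:: 1; 2] 0 0;
  SBirk 2 3 [:: 1; 1; 0; 0] [:: 2] [:: 1; 2; 3] 0 0;
  SBirk 2 3 [:: 2; 2; 0; 0] [:: 1; 2] [:: 1; 3] 0 0;
  SDiag [:: 0; 1; 2; 3] [:: 3; 1; 0; 2] [:: 3; 2; 0; 1];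
  SDiag [:: 0; 1; 2; 3] [:: 0; 2; 3; 1] [:: 0; 3; 1; 2];
  SBirk 2 3 [:: 3; 3; 0; 0] [:: 2; 3] [:: 1; 2] 0 0;
  SDiag [:: 1; 0; 2; 3] [:: 1; 0; 2; 3] [:: 0; 3; 2; 1];
  SDiag [:: 0; 1; 2; 3] [:: 0; 2; 1; 3] [:: 0; 3; 2; 1];
  SBirk 0 3 [:: 0; 0; 0; 0] [:: 1; 2; 3] [:: 3] 0 0;
  SDiag [:: 2; 1; 3; 0] [:: 2; 3; 1; 0] [:: 0; 1; 2; 3];
  SDiag [:: 2; 1; 3; 0] [:: 2; 1; 3; 0] [:: 0; 2; 1; 3];
  SBirk 0 1 [:: 0; 0; 1; 2] [:: 2] [:: 0; 2; 3] 1 1;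
  SBirk 0 1 [:: 0; 0; 3; 1] [:: 2] [:: 0; 2; 3] 1 1;
  SDiag [:: 2; 1; 0; 3] [:: 2; 3; 1; 0] [:: 3; 1; 2; 0];
  SDiag [:: 1; 3; 0; 2] [:: 1; 0; 3; 2] [:: 0; 2; 1; 3];
  SBirk 0 1 [:: 0; 0; 2; 3] [:: 0; 2; 3] [:: 2] 1 1;
  SBirk 2 3 [:: 2; 2; 0; 0] [:: 2] [:: 1; 2; 3] 0 0;
  SBirk 2 3 [:: 3; 3; 0; 0] [:: 1; 3] [:: 1; 3] 0 0;
  SBirk 0 2 [:: 0; 0; 0; 3] [:: 1; 2; 3] [:: 0] 0 3;
  SDiag [:: 2; 1; 0; 3] [:: 2; 1; 3; 0] [:: 3; 2; 1; 0];
  SDiag [:: 2; 1; 0; 3] [:: 2; 0; 3; 1] [:: 0; 3; 1; 2];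
  SBirk 0 1 [:: 0; 0; 2; 3] [:: 0; 1; 2] [:: 2] 3 3;
  SBirk 1 2 [:: 1; 0; 0; 3] [:: 1] [:: 0; 1; 3] 2 2;
  SDiag [:: 3; 1; 2; 0] [:: 3; 2; 1; 0] [:: 0; 3; 2; 1];
  SDiag [:: 0; 1; 2; 3] [:: 0; 3; 1; 2] [:: 0; 1; 2; 3];
  SDiag [:: 2; 1; 0; 3] [:: 2; 1; 0; 3] [:: 0; 2; 1; 3];
  SBirk 0 2 [:: 0; 0; 0; 1] [:: 1; 2; 3] [:: 0] 0 1;
  SDiag [:: 3; 0; 2; 1] [:: 3; 0; 1; 2] [:: 0; 1; 2; 3];
  SBirk 0 1 [:: 0; 0; 2; 3] [:: 3] [:: 0; 1; 3] 2 2;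
  SDiag [:: 3; 1; 2; 0] [:: 3; 1; 0; 2] [:: 0; 2; 1; 3];
  SDiag [:: 3; 1; 2; 0] [:: 3; 1; 0; 2] [:: 1; 2; 0; 3];
  SBirk 1 2 [:: 2; 0; 0; 1] [:: 2] [:: 0; 1; 2] 3 3;
  SBirk 0 1 [:: 0; 0; 3; 1] [:: 0; 2; 3] [:: 3] 1 1;
  SDiag [:: 0; 1; 2; 3] [:: 0; 3; 1; 2] [:: 0; 3; 2; 1];
  SBirk 2 3 [:: 3; 3; 0; 0] [:: 2] [:: 1; 2; 3] 0 0;
  SDiag [:: 0; 1; 2; 3] [:: 1; 0; 3; 2] [:: 2; 0; 1; 3];
  SDiag [:: 3; 1; 2; 0] [:: 3; 1; 0; 2] [:: 0; 1; 2; 3];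
  SDiag [:: 3; 1; 2; 0] [:: 1; 0; 3; 2] [:: 2; 0; 1; 3];
  SBirk 0 2 [:: 0; 2; 0; 2] [:: 2] [:: 0; 2; 3] 0 1;
  SBirk 1 3 [:: 0; 0; 1; 0] [:: 0; 2; 3] [:: 2] 1 0;
  SBirk 2 3 [:: 3; 3; 0; 0] [:: 1; 2] [:: 1; 2] 0 0;
  SDiag [:: 1; 0; 2; 3] [:: 1; 0; 3; 2] [:: 0; 2; 3; 1];
  SDiag [:: 0; 1; 2; 3] [:: 0; 1; 3; 2] [:: 0; 2; 3; 1];
  SBirk 1 3 [:: 1; 0; 0; 0] [:: 0; 2; 3] [:: 2] 1 0;
  SBirk 2 3 [:: 2; 2; 0; 0] [:: 1; 2] [:: 2; 3] 0 0;
  SDiag [:: 0; 2; 1; 3] [:: 3; 0; 1; 2] [:: 3; 2; 0; 1];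
  SDiag [:: 2; 1; 0; 3] [:: 2; 3; 0; 1] [:: 0; 2; 1; 3];
  SBirk 0 3 [:: 0; 0; 0; 0] [:: 1; 2; 3] [:: 1] 0 0;
  SDiag [:: 2; 0; 1; 3] [:: 2; 0; 3; 1] [:: 0; 1; 2; 3];
  SDiag [:: 2; 0; 1; 3] [:: 2; 0; 1; 3] [:: 0; 1; 3; 2];
  SBirk 0 1 [:: 0; 0; 3; 2] [:: 2] [:: 0; 1; 2] 3 3;
  SBirk 1 3 [:: 2; 0; 1; 0] [:: 1] [:: 0; 2; 3] 2 1;
  SDiag [:: 2; 1; 0; 3] [:: 2; 0; 3; 1] [:: 1; 0; 2; 3];
  SBirk 0 1 [:: 0; 0; 2; 1] [:: 0; 1; 2] [:: 2] 3 3;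
  SDiag [:: 0; 1; 2; 3] [:: 0; 2; 1; 3] [:: 0; 1; 3; 2];
  SDiag [:: 1; 0; 2; 3] [:: 1; 0; 2; 3] [:: 0; 2; 1; 3];
  SDiag [:: 0; 1; 2; 3] [:: 1; 0; 2; 3] [:: 1; 0; 2; 3];
  SBirk 2 3 [:: 1; 1; 0; 0] [:: 1] [:: 1; 2; 3] 0 0;
  SBirk 2 3 [:: 1; 1; 0; 0] [:: 1; 3] [:: 1; 2] 0 0;
  SDiag [:: 1; 2; 0; 3] [:: 1; 0; 2; 3] [:: 0; 2; 1; 3];
  SDiag [:: 3; 1; 2; 0] [:: 3; 1; 0; 2] [:: 2; 3; 0; 1];
  SDiag [:: 3; 1; 2; 0] [:: 3; 1; 0; 2] [:: 0; 3; 2; 1];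
  SBirk 0 1 [:: 0; 0; 3; 2] [:: 0; 2; 3] [:: 3] 1 1;
  SBirk 1 2 [:: 2; 0; 0; 2] [:: 2] [:: 0; 1; 2] 3 3;
  SDiag [:: 1; 0; 2; 3] [:: 1; 0; 2; 3] [:: 0; 3; 1; 2];
  SDiag [:: 2; 1; 0; 3] [:: 2; 1; 0; 3] [:: 0; 1; 3; 2];
  SDiag [:: 1; 3; 2; 0] [:: 1; 2; 3; 0] [:: 0; 1; 2; 3];
  SBirk 0 1 [:: 0; 0; 2; 1] [:: 1] [:: 0; 1; 3] 2 2;
  SDiag [:: 1; 0; 2; 3] [:: 1; 2; 0; 3] [:: 0; 1; 3; 2];
  SDiag [:: 1; 0; 2; 3] [:: 1; 2; 0; 3] [:: 3; 1; 0; 2];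
  SBirk 1 2 [:: 2; 0; 0; 3] [:: 2] [:: 0; 2; 3] 1 1;
  SBirk 0 1 [:: 0; 0; 1; 3] [:: 0; 1; 2] [:: 1] 3 3;
  SDiag [:: 0; 1; 2; 3] [:: 3; 2; 1; 0] [:: 3; 2; 1; 0]].
Definition main_proof : seq (seq nat * seq nat) := [::
  ([:: 283; 455; 79; 197; 148], [:: 0; 1; 2; 3; 4]);
  ([:: 500; 244; 468; 352; 376; 59; 399; 35; 213; 416], [:: 5; 6; 7; 8; 9; 10; 11; 12; 13; 14; 15; 16]);
  ([:: 501; 318; 59; 298; 213], [:: 17; 18; 19; 20; 6; 21; 22; 23; 24; 25]);
  ([:: 35; 416; 468; 59; 244; 352; 500; 213; 399], [:: 395; 26]);
  ([:: 111; 283; 399; 500; 244; 59; 290; 192; 213; 373; 352], [:: 18; 19; 5; 6; 27; 28; 8; 397; 29; 30; 13; 31; 32; 33; 34]);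
  ([:: 419; 213; 352; 373; 79; 204; 437; 192; 196], [:: 18; 6; 13; 30; 9; 35; 36; 37]);
  ([:: 59; 318; 46; 196; 204; 298; 290; 213; 399; 283], [:: 17; 18; 19; 5; 38; 20; 1; 39; 40; 396; 7; 10; 398; 41; 3; 42; 399; 43; 44; 29; 45; 46; 26; 47]);
  ([:: 372; 468; 500; 234], [:: 18; 19; 5; 20; 6; 1; 48; 7; 49; 50; 51; 52]);
  ([:: 27; 110; 399; 46; 213], [:: 17; 19; 5; 20; 1; 53; 54; 55; 56; 57; 58; 59]);
  ([:: 372; 213; 500; 399; 204; 196; 298; 35], [:: 19; 5; 20; 6; 1; 60; 7; 61; 51; 62; 63; 64; 65; 66]);
  ([:: 500; 298; 196; 204; 35; 58; 399; 46; 307; 318; 213; 283], [:: 0; 19; 5; 6; 67; 1; 403; 68; 11; 69; 70; 402; 53; 71; 27; 55; 72; 8; 73; 74; 75; 76; 77; 78; 79]);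
  ([:: 501; 298; 283; 318; 213], [:: 17; 18; 19; 20; 6; 22; 21; 80; 81; 25]);
  ([:: 399; 318; 46; 500; 298; 213; 486; 283], [:: 18; 0; 19; 38; 20; 6; 67; 1; 82; 83; 84; 85; 400; 404; 86; 29; 87; 88; 89; 90; 91; 92; 93; 94; 95; 96; 2; 97; 98; 99; 100]);
  ([:: 27; 111; 398; 373; 213; 154; 298], [:: 17; 0; 19; 5; 20; 67; 1; 53; 101; 102; 103; 104; 105; 106; 107; 58; 108]);
  ([:: 142; 398; 51; 192; 213; 437; 283; 373; 416; 154; 26; 234; 111; 91], [:: 18; 0; 38; 67; 1; 109; 110; 111; 112; 113; 15; 114; 115; 116; 92; 117; 118; 119; 120; 121; 122; 123; 124; 125]);
  ([:: 111; 298; 398; 51; 500; 34; 58; 283; 213], [:: 18; 19; 5; 20; 6; 67; 1; 28; 27; 8; 126; 76; 127; 401; 407; 69; 408; 128; 129; 130; 131; 132; 133; 134; 135; 136; 137; 138; 139]);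
  ([:: 143; 51; 26; 34; 58; 500; 437; 283; 213], [:: 18; 19; 20; 6; 1; 130; 129; 128; 134; 133; 132; 131; 137; 136; 135; 138; 139]);
  ([:: 192; 213; 437; 110; 478; 291; 194; 79; 283], [:: 18; 19; 67; 113; 140; 141; 142; 143; 144; 145; 146; 394]);
  ([:: 193; 373; 318; 478; 298], [:: 18; 0; 5; 6; 1; 147; 148; 149; 150; 66]);
  ([:: 271; 283; 79; 437; 192; 478; 110; 213; 34], [:: 19; 67; 111; 112; 411; 29]);
  ([:: 437; 110; 478; 192; 79; 398; 283; 58; 34; 51; 213; 500; 298], [:: 0; 19; 38; 20; 6; 1; 413; 151; 410; 128; 53; 131; 152; 153; 136; 154; 155; 156]);
  ([:: 245; 298; 318], [:: 18; 0; 19; 5; 20; 6; 1; 157; 51; 81; 150; 158; 66; 159; 160; 161]);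
  ([:: 58; 298; 500; 213; 34; 437; 79; 283; 398; 110; 192; 478], [:: 0; 162; 414]);
  ([:: 27; 437; 46; 143; 283; 213; 224; 122; 254; 500; 110], [:: 17; 5; 20; 67; 1; 163; 53; 164; 165; 166; 104; 105; 167; 168; 169; 170; 171]);
  ([:: 347; 122; 26; 410; 213; 486; 46; 373; 478], [:: 17; 0; 19; 5; 1; 172; 173; 174; 175; 176; 177; 178; 179; 180; 181]);
  ([:: 431; 213; 373; 346; 59], [:: 17; 5; 20; 105; 104; 103; 182]);
  ([:: 34; 192; 298; 500; 254; 224; 283; 437; 46; 486; 410; 213; 79; 398; 110; 478; 458; 234; 373], [:: 17; 18; 19; 5; 20; 6; 1; 413; 109; 130; 416; 417; 418; 419; 183; 184; 185; 186; 56; 187; 188; 189; 190; 191; 192]);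
  ([:: 59; 79; 398; 192; 110; 500; 254; 224; 283; 35; 478; 46; 486; 410; 373; 437; 213], [:: 18; 38; 20; 6; 1; 193; 151; 194; 195; 130; 196; 417; 197; 418; 32; 117; 198; 199; 419; 200; 201; 202]);
  ([:: 143; 373; 26; 58; 91; 478; 35; 437; 234], [:: 18; 19; 5; 20; 198; 130; 195; 133; 203; 204; 205; 206; 207; 208; 209; 32; 210; 211; 212]);
  ([:: 142; 192; 213; 437; 298; 110; 283; 398; 79; 478], [:: 18; 19; 67; 151; 111; 113; 411; 140; 83; 141; 213; 142; 214; 144; 215]);
  ([:: 110; 244; 458; 486; 398; 298; 192; 500; 213; 283; 46; 478; 373], [:: 18; 19; 5; 20; 6; 1; 216; 217; 3; 42; 218; 126; 219; 420; 421; 423; 130; 417; 197; 422]);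
  ([:: 271; 213; 373; 283; 416; 437; 192; 234], [:: 18; 5; 38; 20; 67; 111; 112; 113; 15; 114; 117; 92; 220; 221; 222; 223]);
  ([:: 58; 122; 234; 437; 478; 143; 26; 373; 213; 283; 111; 500; 298; 398], [:: 18; 134; 224; 225; 422; 409; 226]);
  ([:: 410; 478; 46; 486; 122; 26; 154; 59; 373; 270; 111; 398; 213; 283; 244; 500], [:: 17; 19; 38; 67; 418; 227; 228; 419; 229; 102; 176; 230; 231; 232; 233; 234; 235]);
  ([:: 213; 283], [:: 18; 0; 19; 5; 20; 6; 67; 1; 236; 237; 238; 239; 405; 406; 415; 7; 240; 241; 412; 424; 27; 28; 8; 127; 126; 407; 425; 109; 130; 426; 427; 115; 242; 217; 113; 243; 244; 245; 246; 247; 248; 249; 250; 251]);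
  ([:: 111; 283; 212; 254; 234; 437], [:: 17; 18; 19; 38; 6; 1; 27; 252; 253; 50; 254; 255; 256]);
  ([:: 244; 500; 212; 254], [:: 18; 19; 5; 20; 67; 257; 258; 259; 260; 261]);
  ([:: 244; 212; 254; 234; 373], [:: 17; 18; 5; 20; 6; 430; 258; 21; 262; 263; 254; 52; 264]);
  ([:: 373; 234; 254; 212], [:: 17; 18; 19; 5; 20; 6; 241; 240; 431; 51; 157; 265; 190; 50; 263; 266; 267; 268; 269]);
  ([:: 501; 283; 110; 234; 437], [:: 18; 0; 19; 20; 6; 270; 262; 271; 41; 272; 273; 274; 275; 276]);
  ([:: 437; 212; 283], [:: 18; 19; 5; 20; 6; 1; 126; 219; 429; 432; 433; 401; 277; 259; 212; 278; 279; 280; 281; 282; 283]);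
  ([:: 234; 362; 202; 446; 454; 469; 245; 382; 309], [:: 18; 0; 19; 5; 6; 67; 1; 282; 272; 280; 66; 284; 261; 285; 286; 287; 288; 289; 290; 291]);
  ([:: 372; 500; 436; 283; 382; 362; 469], [:: 17; 18; 0; 5; 20; 6; 67; 1; 7; 292; 2; 157; 293; 435; 294; 295; 81; 415; 287; 296; 297; 298; 299; 300]);
  ([:: 235; 469; 478; 458; 362], [:: 17; 18; 19; 5; 20; 6; 301; 294; 190; 149; 280; 210; 302]);
  ([:: 500; 283; 436; 212], [:: 17; 18; 0; 19; 5; 20; 6; 8; 259; 277; 436; 240; 241; 437; 432; 212; 303; 304; 210; 150; 305; 266]);
  ([:: 234; 170; 436; 190; 350; 283; 198], [:: 17; 18; 19; 5; 20; 6; 67; 1; 272; 293; 283; 306; 81; 307; 263; 192; 308; 309; 212; 265; 310; 311; 312; 37; 313; 314; 315; 316]);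
  ([:: 283], [:: 17; 18; 0; 19; 5; 38; 20; 6; 1; 428; 434; 438; 21; 317; 262; 22; 318; 439; 301; 81; 319; 294; 320; 321; 322; 252; 323; 324; 309; 325; 326; 327; 328; 329; 330; 331; 332; 333; 334; 335; 336]);
  ([:: 501; 436; 212; 446; 235], [:: 17; 18; 0; 19; 5; 38; 20; 6; 1; 22; 262; 317; 21; 81; 320; 294; 283; 323; 337; 322; 321; 263; 260; 325; 161; 305; 338; 303; 327; 339; 331; 333; 340; 341; 342; 343]);
  ([:: 235; 436; 212], [:: 17; 18; 19; 5; 38; 20; 6; 67; 301; 441; 8; 294; 277; 259; 284; 81; 260; 280; 279; 306; 24; 302; 344; 328; 345; 346; 347; 348; 349; 350; 351; 352; 353]);
  ([:: 500; 212; 436; 234], [:: 17; 18; 0; 19; 5; 20; 6; 67; 1; 8; 259; 277; 212; 50; 263; 210; 267; 42; 354; 293; 157; 355; 272; 435; 356; 241; 357; 358; 359; 360]);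
  ([:: 436; 212], [:: 17; 18; 0; 19; 5; 38; 20; 6; 67; 1; 440; 442; 443; 21; 317; 262; 22; 272; 319; 293; 361; 160; 81; 306; 362; 363; 161; 259; 192; 364; 24; 159; 365; 366; 367; 312; 368; 369; 370; 371; 372; 373; 154; 374]);
  ([:: 501; 234; 437; 254], [:: 17; 18; 5; 20; 6; 1; 262; 21; 272; 375; 283; 281]);
  ([:: 212], [:: 18; 19; 5; 20; 6; 67; 1; 444; 219; 126; 432; 445; 401; 277; 259; 212; 261; 279; 280; 281; 282; 283]);
  ([:: 469; 254], [:: 18; 19; 5; 6; 1; 446; 239; 238; 259; 277; 281; 24; 158]);
  ([:: 382; 254; 234; 192], [:: 17; 18; 0; 19; 5; 20; 6; 67; 1; 440; 446; 238; 261; 376; 377; 266; 280; 364; 321; 378; 379; 380; 269; 37; 381; 382; 383; 384]);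
  ([:: 437], [:: 17; 18; 0; 19; 5; 38; 20; 6; 1; 446; 239; 238; 415; 126; 219; 445; 7; 241; 240; 412; 447; 448; 46; 385; 375; 265; 378; 210; 386; 149; 339; 387; 388; 389; 390; 391; 392]);
  ([:: 500], [:: 18; 19; 5; 6; 1; 446; 239; 238; 415; 449; 42; 8; 393; 277; 24]);
  ([:: ], [:: 17; 18; 19; 20; 6; 1; 446; 239; 238; 450; 21; 22; 81; 24; 25])].
Definition main_ok :=
  all (fun sp => isSome (main_clause sp)) main_inputs &&
  checkp (map (fun sp => odflt [::] (main_clause sp)) main_inputs)
         (map (fun p => (map litc p.1, p.2)) main_proof).
Lemma main_ok_true : main_ok = true.
Proof. vm_compute. reflexivity. Qed.
Lemma db_sound (cl : spec -> option (seq (lit (seq nat)))) (m : seq nat -> bool) ins :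
  (forall sp C, cl sp = Some C -> has (litv m) C) -> all (fun sp => isSome (cl sp)) ins ->
  all (fun C => has (litv m) C) (map (fun sp => odflt [::] (cl sp)) ins).
Proof.
move=> H; elim: ins => //= sp ins IH /andP [h1 h2]; rewrite IH // andbT.
by case E: (cl sp) h1 => [C|] // _; exact: H E.
Qed.

Lemma key (R : realFieldType) (A : mdmatrix R 4 4) :
  polystochastic A -> (forall c, c \in units -> 0 < A (decode c)) -> pdb A.
Proof.
move=> HA HU; case H: (pdb A) => //.
have Hnd : ~~ pdb A by rewrite H.
exfalso; move: main_ok_true; rewrite /main_ok => /andP [Hs Hc].
apply: (checkp_sound (m := mA A) _ Hc).
apply: db_sound Hs => sp C E; exact: (main_sound HA HU Hnd E).
Qed.

Definition tc_clause (v0 : nat) (sp : spec) : option (seq (lit (seq nat))) :=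
  match sp with
  | SB2 Rs Cs u v => if birk_ok Rs Cs u v then
        Some ((false, [:: u; v]) :: [seq (true, [:: r; c]) | r <- Rs, c <- Cs]) else None
  | SU2 c => if c == [:: 0%N; v0] then Some [:: (true, c)] else None
  | SP l => if perm_eq l (iota 0 4) && (nth 0%N l 0 == v0) then
        Some [seq (false, [:: i; nth 0%N l i]) | i <- iota 0 4] else None
  | _ => None
  end.

Definition litc2 (n : nat) : lit (seq nat) := (~~ odd n, [:: n./2 %/ 4; n./2 %% 4]%N).

Definition tc_ok (v0 : nat) (ins : seq spec) (pr : seq (seq nat * seq nat)) :=
  all (fun sp => isSome (tc_clause v0 sp)) ins &&
  checkp (map (fun sp => odflt [::] (tc_clause v0 sp)) ins)
         (map (fun p => (map litc2 p.1, p.2)) pr).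

Definition fl (l : seq nat) (i : 'I_4) : 'I_4 := inord (nth 0%N l i).
Lemma fl_inj l : perm_eq l (iota 0 4) -> injective (fl l).
Proof.
move=> H i i' /inord4_inj E; apply/val_inj.
by apply: (perm_nth_inj H (ltn_ord i) (ltn_ord i')); apply: E; apply: perm_nth_lt.
Qed.

Notation P4 := ({perm 'I_4}) (only parsing).
Section TC.
Variables (R : realFieldType) (f : 'I_4 -> 'I_4 -> R) (v0 : 'I_4).
Hypothesis f0 : forall u v, 0 <= f u v.
Hypothesis Hr : forall u, \sum_v f u v = 1.
Hypothesis Hc : forall v, \sum_u f u v = 1.
Hypothesis Hp : 0 < f ord0 v0.
Hypothesis Hno : ~~ [exists s : P4, (s ord0 == v0) && [forall i, 0 < f i (s i)]].

Definition m2 (c : seq nat) : bool := 0 < f (inord (nth 0%N c 0)) (inord (nth 0%N c 1)).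

Lemma tc_sound sp C : tc_clause v0 sp = Some C -> has (litv m2) C.
Proof.
case: sp => [?|?|?|?|Rs Cs u v|c|l] //; cbn [tc_clause].
- case: ifP => // /and3P [/and4P [hu hv uR vC] /and4P [URs UCs aR aC] sz] [<-].
  rewrite /= /litv /=; case E: (m2 [:: u; v]) => //=.
  have hu' : nat_of_ord (inord u : 'I_4) = u by rewrite inordK.
  have hv' : nat_of_ord (inord v : 'I_4) = v by rewrite inordK.
  have Hcard : (#|[pred r : 'I_4 | nat_of_ord r \in Rs]| + #|[pred c : 'I_4 | nat_of_ord c \in Cs]|)%N = 4%N.
    by rewrite !card_valin //; apply/eqP.
  have Pu : (inord u : 'I_4) \notin [pred r : 'I_4 | nat_of_ord r \in Rs] by rewrite inE hu'.
  have Pv : (inord v : 'I_4) \notin [pred c : 'I_4 | nat_of_ord c \in Cs] by rewrite inE hv'.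
  case: (mass2 f0 Hr Hc Hcard Pu Pv E) => r [c [Pr Pc hp]].
  apply/hasP; exists (true, [:: nat_of_ord r; nat_of_ord c]).
    by apply/allpairsP; exists (nat_of_ord r, nat_of_ord c).
  by rewrite /litv /m2 /= !inord_val eqb_id.
- case: ifP => // /eqP -> [<-].
  rewrite /= /litv /m2 /= eqb_id orbF.
  have -> : (inord 0 : 'I_4) = ord0 by apply/val_inj; rewrite /= inordK.
  by rewrite inord_val.
- case: ifP => // /andP [H /eqP h0] [<-].
  apply/negPn/negP => Hn.
  have Hall (i : 'I_4) : 0 < f i (fl l i).
    apply/negPn/negP => h; apply: (negP Hn); apply/hasP; exists (false, [:: nat_of_ord i; nth 0%N l i]).
      by case: i {h} => [[|[|[|[|i]]]] hi] //=; rewrite !inE eqxx ?orbT.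
    by rewrite /litv /m2 /= inord_val (negbTE h).
  move/negP: Hno; apply; apply/existsP; exists (perm (fl_inj H)).
  apply/andP; split.
    by rewrite permE /fl /= h0 inord_val.
  by apply/forallP => i; rewrite permE.
Qed.

Lemma tc_sound_gen ins pr : tc_ok v0 ins pr -> False.
Proof.
rewrite /tc_ok => /andP [Hs Hc'].
apply: (checkp_sound (m := m2) _ Hc').
apply: db_sound Hs => sp C E; exact: (tc_sound E).
Qed.
End TC.
Definition tc0_inputs : seq spec := [::
  SU2 [:: 0; 0];
  SB2 [:: 1; 2] [:: 1; 2] 0 0;
  SB2 [:: 2; 3] [:: 0; 1] 1 3;
  SP [:: 0; 3; 2; 1];
  SB2 [:: 3] [:: 1; 2; 3] 0 0;
  SB2 [:: 2; 3] [:: 1; 3] 0 0;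
  SP [:: 0; 1; 3; 2];
  SP [:: 0; 1; 2; 3];
  SB2 [:: 0; 2] [:: 1; 2] 3 3;
  SB2 [:: 0; 1; 3] [:: 2] 2 1;
  SP [:: 0; 3; 1; 2];
  SB2 [:: 1] [:: 1; 2; 3] 0 0;
  SB2 [:: 1; 2] [:: 2; 3] 0 0;
  SB2 [:: 1; 2; 3] [:: 3] 0 0;
  SP [:: 0; 2; 3; 1];
  SB2 [:: 0; 3] [:: 1; 2] 2 3;
  SB2 [:: 2; 3] [:: 2; 3] 1 1;
  SB2 [:: 0; 3] [:: 1; 2] 1 3;
  SB2 [:: 0; 2; 3] [:: 2] 1 3;
  SP [:: 0; 2; 1; 3];
  SB2 [:: 1; 3] [:: 1; 3] 0 0;
  SB2 [:: 0; 2; 3] [:: 1] 1 2;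
  SB2 [:: 2] [:: 1; 2; 3] 0 0;
  SB2 [:: 1; 2] [:: 1; 3] 0 0;
  SB2 [:: 0; 1; 2] [:: 2] 3 1;
  SB2 [:: 1; 3] [:: 2; 3] 0 0;
  SB2 [:: 0; 1] [:: 1; 2] 3 0;
  SB2 [:: 0; 1] [:: 1; 2] 2 0;
  SB2 [:: 1; 2; 3] [:: 1] 0 2;
  SB2 [:: 1; 2; 3] [:: 2] 0 0;
  SB2 [:: 1; 2; 3] [:: 3] 0 2;
  SB2 [:: 1; 3] [:: 1; 2] 0 0;
  SB2 [:: 2; 3] [:: 2; 3] 0 0;
  SB2 [:: 0; 1; 3] [:: 1] 2 3;
  SB2 [:: 1; 2; 3] [:: 3] 0 1;
  SB2 [:: 2; 3] [:: 1; 2] 0 0;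
  SB2 [:: 2; 3] [:: 1; 3] 1 2;
  SB2 [:: 1; 2; 3] [:: 1] 0 0;
  SB2 [:: 1; 3] [:: 2; 3] 0 1].
Definition tc0_proof : seq (seq nat * seq nat) := [::
  ([:: 18; 12; 10; 24; 16; 15], [:: 0; 1; 2; 3]);
  ([:: 30; 26; 18; 11], [:: 0; 4; 5; 6]);
  ([:: 31; 11; 18; 4; 2], [:: 0; 7; 8]);
  ([:: 18; 26; 2; 4; 11], [:: 40; 41]);
  ([:: 12; 4; 19], [:: 0; 9; 10; 11; 6; 12; 13; 7]);
  ([:: 23; 13; 11; 4; 2], [:: 0; 14; 6; 15]);
  ([:: 11; 13; 19; 30; 4; 2], [:: 0; 44; 13; 10; 16; 17; 3]);
  ([:: 27; 13; 30; 19; 4], [:: 0; 14; 13; 3; 10; 18]);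
  ([:: 19; 2; 4], [:: 0; 43; 19; 45; 46; 4; 20; 10]);
  ([:: 13; 2; 18], [:: 0; 21; 14; 22; 3; 23; 13; 7]);
  ([:: 11; 2; 18; 4; 12], [:: 0; 42; 41; 24; 3; 25; 13; 6]);
  ([:: 4; 2], [:: 0; 47; 48; 49; 26; 27; 11; 39]);
  ([:: 10; 5; 18; 12], [:: 0; 28; 1; 11; 3]);
  ([:: 20; 18; 12; 11], [:: 0; 22; 29; 6]);
  ([:: 18; 2; 5], [:: 0; 48; 51; 52; 7; 40; 3; 30; 25; 6]);
  ([:: 30; 5; 14; 12; 11], [:: 0; 30; 25; 6]);
  ([:: 14; 5; 12; 11], [:: 0; 54; 7; 12; 29; 6]);
  ([:: 11; 5; 19; 12], [:: 0; 55; 10; 29; 3; 7; 4]);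
  ([:: 12; 5; 19], [:: 0; 56; 11; 10; 31; 29; 3]);
  ([:: 15; 19; 13; 30], [:: 0; 10; 4; 14; 3; 32]);
  ([:: 2], [:: 0; 50; 53; 57; 19; 58; 30; 14; 33; 4; 6]);
  ([:: 19; 13], [:: 0; 59; 19; 58; 34; 14; 20; 4; 6]);
  ([:: 22; 14; 18; 11], [:: 0; 59; 34; 22; 7]);
  ([:: 23; 13; 18; 11], [:: 0; 6; 14; 40; 35; 7]);
  ([:: 11; 18; 13], [:: 0; 62; 61; 22; 7; 3; 36]);
  ([:: 13], [:: 0; 60; 63; 37; 14; 22; 23; 3]);
  ([:: 10; 18], [:: 0; 64; 1; 11; 37; 3]);
  ([:: 18], [:: 0; 59; 64; 65; 52; 7; 40; 3; 34; 38; 6]);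
  ([:: ], [:: 64; 66; 43; 57])].
Definition tc1_inputs : seq spec := [::
  SU2 [:: 0; 1];
  SB2 [:: 1; 2] [:: 0; 3] 0 1;
  SB2 [:: 0; 2; 3] [:: 0] 1 2;
  SP [:: 1; 2; 3; 0];
  SB2 [:: 0; 3] [:: 0; 2] 1 3;
  SB2 [:: 0; 2; 3] [:: 2] 1 3;
  SP [:: 1; 3; 2; 0];
  SP [:: 1; 3; 0; 2];
  SB2 [:: 0; 2] [:: 0; 2] 1 3;
  SB2 [:: 0; 2; 3] [:: 0] 1 3;
  SB2 [:: 2] [:: 0; 2; 3] 0 1;
  SB2 [:: 1; 2; 3] [:: 3] 0 1;
  SP [:: 1; 0; 2; 3];
  SB2 [:: 1; 3] [:: 2; 3] 0 1;
  SP [:: 1; 0; 3; 2];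
  SB2 [:: 1] [:: 0; 2; 3] 0 1;
  SB2 [:: 0; 1; 2] [:: 2] 3 3;
  SP [:: 1; 2; 0; 3];
  SB2 [:: 0; 1; 3] [:: 0] 2 3;
  SB2 [:: 0; 3] [:: 0; 2] 2 3;
  SB2 [:: 1; 2; 3] [:: 3] 0 2;
  SB2 [:: 1; 3] [:: 0; 3] 0 2;
  SB2 [:: 3] [:: 0; 2; 3] 0 1;
  SB2 [:: 1; 2; 3] [:: 2] 0 1;
  SB2 [:: 1; 2] [:: 2; 3] 0 1;
  SB2 [:: 0; 1; 3] [:: 0] 2 2;
  SB2 [:: 0; 1; 2] [:: 0] 3 2;
  SB2 [:: 2; 3] [:: 2; 3] 0 1;
  SB2 [:: 2; 3] [:: 2; 3] 0 0;
  SB2 [:: 2; 3] [:: 0; 2] 0 1;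
  SB2 [:: 1; 2; 3] [:: 0] 0 1;
  SB2 [:: 2; 3] [:: 0; 3] 1 2;
  SB2 [:: 2; 3] [:: 0; 3] 0 1;
  SB2 [:: 1; 2] [:: 0; 2] 0 1;
  SB2 [:: 1; 2; 3] [:: 2] 0 0;
  SB2 [:: 1; 3] [:: 0; 2] 0 1;
  SB2 [:: 1; 2] [:: 2; 3] 0 0;
  SB2 [:: 1; 2; 3] [:: 3] 0 0;
  SB2 [:: 1; 3] [:: 0; 3] 0 1].
Definition tc1_proof : seq (seq nat * seq nat) := [::
  ([:: 16; 14; 8; 0; 13], [:: 0; 1; 2; 3]);
  ([:: 28; 0; 4; 15], [:: 0; 4; 5; 6]);
  ([:: 15; 4; 0], [:: 0; 40; 7; 8; 9; 6]);
  ([:: 13; 0; 16; 14], [:: 0; 39; 2; 3; 10; 11; 12]);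
  ([:: 30; 14; 12; 9], [:: 0; 11; 13; 14]);
  ([:: 12; 14; 4], [:: 0; 15; 43; 16; 12]);
  ([:: 4; 0], [:: 0; 41; 44; 42; 17; 11; 3; 18; 19; 14]);
  ([:: 13; 0; 14; 5], [:: 0; 42; 17; 20; 3; 21; 22; 14]);
  ([:: 14; 5; 0], [:: 0; 46; 15; 43; 12; 23; 24; 14]);
  ([:: 28; 12; 15; 0], [:: 0; 23; 6; 25; 22; 12]);
  ([:: 29; 0; 15], [:: 0; 7; 26; 14; 9; 10; 6]);
  ([:: 16; 0; 13; 15], [:: 0; 2; 3; 6; 10]);
  ([:: 0], [:: 0; 45; 47; 49; 48; 50; 17; 22; 6; 3; 27]);
  ([:: 17; 13; 15], [:: 0; 51; 7; 17; 22; 3; 6; 28]);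
  ([:: 25; 15; 13; 16], [:: 0; 6; 3; 10]);
  ([:: 20; 16; 24; 9], [:: 0; 10; 29; 14]);
  ([:: 13; 15], [:: 0; 52; 53; 30; 54; 12; 31; 22; 14]);
  ([:: 24; 16], [:: 0; 30; 54; 12; 22; 32; 14]);
  ([:: 16; 15; 12], [:: 0; 51; 56; 6; 33; 34; 10; 14]);
  ([:: 15], [:: 0; 51; 55; 57; 7; 34; 6; 22; 35; 12]);
  ([:: 12], [:: 0; 51; 58; 15; 43; 12; 36; 23; 14]);
  ([:: 30], [:: 0; 51; 58; 59; 37; 3; 38; 22; 14]);
  ([:: ], [:: 0; 58; 59; 60; 17; 56; 3; 10; 1; 12])].
Definition tc2_inputs : seq spec := [::
  SU2 [:: 0; 2];
  SB2 [:: 1; 2] [:: 0; 3] 0 2;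
  SB2 [:: 0; 2; 3] [:: 0] 1 1;
  SP [:: 2; 1; 3; 0];
  SB2 [:: 0; 3] [:: 0; 1] 1 3;
  SB2 [:: 0; 2; 3] [:: 1] 1 3;
  SP [:: 2; 3; 1; 0];
  SP [:: 2; 3; 0; 1];
  SB2 [:: 0; 2] [:: 0; 1] 1 3;
  SB2 [:: 0; 2; 3] [:: 0] 1 3;
  SB2 [:: 2] [:: 0; 1; 3] 0 2;
  SB2 [:: 1; 2; 3] [:: 3] 0 2;
  SP [:: 2; 0; 1; 3];
  SB2 [:: 1; 3] [:: 1; 3] 0 2;
  SP [:: 2; 0; 3; 1];
  SB2 [:: 1] [:: 0; 1; 3] 0 2;
  SB2 [:: 0; 1; 2] [:: 1] 3 3;
  SP [:: 2; 1; 0; 3];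
  SB2 [:: 0; 1; 3] [:: 0] 2 3;
  SB2 [:: 0; 3] [:: 0; 1] 2 3;
  SB2 [:: 1; 2; 3] [:: 3] 0 1;
  SB2 [:: 1; 3] [:: 0; 3] 0 1;
  SB2 [:: 3] [:: 0; 1; 3] 0 2;
  SB2 [:: 1; 2; 3] [:: 1] 0 2;
  SB2 [:: 1; 2] [:: 1; 3] 0 2;
  SB2 [:: 0; 1; 3] [:: 0] 2 1;
  SB2 [:: 0; 1; 2] [:: 0] 3 1;
  SB2 [:: 2; 3] [:: 1; 3] 0 2;
  SB2 [:: 2; 3] [:: 1; 3] 0 0;
  SB2 [:: 2; 3] [:: 0; 1] 0 2;
  SB2 [:: 1; 2; 3] [:: 0] 0 2;
  SB2 [:: 2; 3] [:: 0; 3] 1 1;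
  SB2 [:: 2; 3] [:: 0; 3] 0 2;
  SB2 [:: 1; 2] [:: 0; 1] 0 2;
  SB2 [:: 1; 2; 3] [:: 1] 0 0;
  SB2 [:: 1; 3] [:: 0; 1] 0 2;
  SB2 [:: 1; 2] [:: 1; 3] 0 0;
  SB2 [:: 1; 2; 3] [:: 3] 0 0;
  SB2 [:: 1; 3] [:: 0; 3] 0 2].
Definition tc2_proof : seq (seq nat * seq nat) := [::
  ([:: 16; 14; 8; 0; 11], [:: 0; 1; 2; 3]);
  ([:: 26; 0; 2; 15], [:: 0; 4; 5; 6]);
  ([:: 15; 2; 0], [:: 0; 40; 7; 8; 9; 6]);
  ([:: 11; 0; 16; 14], [:: 0; 39; 2; 3; 10; 11; 12]);
  ([:: 30; 14; 10; 9], [:: 0; 11; 13; 14]);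
  ([:: 10; 14; 2], [:: 0; 15; 43; 16; 12]);
  ([:: 2; 0], [:: 0; 41; 44; 42; 17; 11; 3; 18; 19; 14]);
  ([:: 11; 0; 14; 3], [:: 0; 42; 17; 20; 3; 21; 22; 14]);
  ([:: 14; 3; 0], [:: 0; 46; 15; 43; 12; 23; 24; 14]);
  ([:: 26; 10; 15; 0], [:: 0; 23; 6; 25; 22; 12]);
  ([:: 27; 0; 15], [:: 0; 7; 26; 14; 9; 10; 6]);
  ([:: 16; 0; 11; 15], [:: 0; 2; 3; 6; 10]);
  ([:: 0], [:: 0; 45; 47; 49; 48; 50; 17; 22; 6; 3; 27]);
  ([:: 17; 11; 15], [:: 0; 51; 7; 17; 22; 3; 6; 28]);
  ([:: 25; 15; 11; 16], [:: 0; 6; 3; 10]);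
  ([:: 18; 24; 16; 9], [:: 0; 29; 10; 14]);
  ([:: 11; 15], [:: 0; 52; 53; 30; 54; 12; 31; 22; 14]);
  ([:: 24; 16], [:: 0; 30; 54; 12; 22; 32; 14]);
  ([:: 16; 15; 10], [:: 0; 51; 56; 6; 33; 34; 10; 14]);
  ([:: 15], [:: 0; 51; 55; 57; 7; 34; 6; 22; 35; 12]);
  ([:: 10], [:: 0; 51; 58; 15; 43; 12; 36; 23; 14]);
  ([:: 30], [:: 0; 51; 58; 59; 37; 3; 38; 22; 14]);
  ([:: ], [:: 0; 58; 59; 60; 17; 56; 3; 10; 1; 12])].
Definition tc3_inputs : seq spec := [::
  SU2 [:: 0; 3];
  SB2 [:: 1; 2] [:: 0; 1] 0 3;
  SB2 [:: 0; 2; 3] [:: 0] 1 2;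
  SP [:: 3; 2; 1; 0];
  SB2 [:: 1] [:: 0; 1; 2] 0 3;
  SB2 [:: 1; 3] [:: 1; 3] 2 0;
  SP [:: 3; 2; 0; 1];
  SP [:: 3; 1; 0; 2];
  SB2 [:: 0; 3] [:: 1; 2] 2 0;
  SB2 [:: 2] [:: 0; 1; 3] 1 2;
  SB2 [:: 2; 3] [:: 0; 3] 1 1;
  SB2 [:: 2] [:: 0; 1; 2] 0 3;
  SB2 [:: 0; 2; 3] [:: 0] 1 1;
  SP [:: 3; 1; 2; 0];
  SB2 [:: 0; 1] [:: 0; 2] 2 1;
  SB2 [:: 0; 1] [:: 0; 2] 3 1;
  SB2 [:: 3] [:: 1; 2; 3] 2 0;
  SB2 [:: 0; 1; 3] [:: 2] 2 0;
  SB2 [:: 1; 3] [:: 2; 3] 2 1;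
  SP [:: 3; 0; 1; 2];
  SB2 [:: 3] [:: 0; 2; 3] 2 1;
  SB2 [:: 1; 2; 3] [:: 1] 0 3;
  SP [:: 3; 0; 2; 1];
  SB2 [:: 1] [:: 1; 2; 3] 3 0;
  SB2 [:: 0] [:: 0; 1; 2] 1 3;
  SB2 [:: 0] [:: 0; 1; 2] 2 3;
  SB2 [:: 0] [:: 0; 1; 2] 3 3;
  SB2 [:: 0; 2] [:: 1; 2] 1 0;
  SB2 [:: 0; 2; 3] [:: 1] 1 0;
  SB2 [:: 1; 2] [:: 1; 2] 0 3;
  SB2 [:: 1; 2; 3] [:: 1] 0 2;
  SB2 [:: 0; 1; 2] [:: 1] 3 0;
  SB2 [:: 0; 1; 2] [:: 1] 3 2;
  SB2 [:: 1; 3] [:: 0; 2] 0 3;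
  SB2 [:: 1; 2; 3] [:: 0] 0 3;
  SB2 [:: 0; 1; 3] [:: 0] 2 1;
  SB2 [:: 3] [:: 0; 1; 2] 0 3;
  SB2 [:: 1; 3] [:: 1; 2] 0 3;
  SB2 [:: 1; 2; 3] [:: 2] 0 3;
  SB2 [:: 0; 3] [:: 0; 1] 2 2;
  SB2 [:: 1; 2] [:: 0; 2] 0 3;
  SB2 [:: 0; 1; 2] [:: 0] 3 2;
  SB2 [:: 0; 2; 3] [:: 1] 1 2;
  SB2 [:: 0; 1; 3] [:: 0] 2 2;
  SB2 [:: 1; 3] [:: 0; 2] 0 1;
  SB2 [:: 0; 1; 2] [:: 0] 3 1;
  SB2 [:: 2; 3] [:: 1; 2] 0 3;
  SB2 [:: 1; 2] [:: 0; 2] 0 1;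
  SB2 [:: 1; 2; 3] [:: 2] 0 1;
  SB2 [:: 1; 3] [:: 1; 2] 0 0;
  SB2 [:: 1; 2; 3] [:: 2] 0 0;
  SB2 [:: 2; 3] [:: 0; 2] 0 3;
  SB2 [:: 1; 3] [:: 0; 1] 0 3;
  SB2 [:: 2; 3] [:: 1; 2] 0 0;
  SB2 [:: 2; 3] [:: 0; 1] 0 3;
  SB2 [:: 1; 2; 3] [:: 1] 0 0].
Definition tc3_proof : seq (seq nat * seq nat) := [::
  ([:: 16; 10; 8; 0; 13], [:: 0; 1; 2; 3]);
  ([:: 10; 0; 8; 30; 14], [:: 0; 4; 56; 5; 6]);
  ([:: 17; 13; 11; 4; 2], [:: 0; 6; 7; 8]);
  ([:: 13; 2; 4; 30; 11; 22], [:: 0; 58; 9; 10; 3]);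
  ([:: 16; 18; 0; 11], [:: 0; 11; 12; 13]);
  ([:: 8; 14; 22; 2; 4; 0; 30], [:: 0; 57; 59; 14; 15; 60; 16; 7]);
  ([:: 17; 11; 12; 4], [:: 0; 7; 17]);
  ([:: 11; 22; 2; 4; 0; 30; 14; 9], [:: 0; 59; 62; 60; 18; 19]);
  ([:: 19; 30; 24; 9], [:: 0; 20; 19]);
  ([:: 18; 16; 10; 9], [:: 0; 11; 21; 22]);
  ([:: 19; 9; 30; 10; 14], [:: 0; 64; 23; 3]);
  ([:: 4; 0; 2], [:: 0; 24; 25; 26; 61; 63; 66; 27; 28; 22]);
  ([:: 9; 18; 10; 27], [:: 0; 22; 65; 29; 6]);
  ([:: 18; 5; 2; 10], [:: 0; 30; 31; 32; 68; 33; 34; 6]);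
  ([:: 8; 10; 0; 19], [:: 0; 4; 35; 3]);
  ([:: 13; 19; 0; 28], [:: 0; 3; 2; 36; 6]);
  ([:: 10; 5; 2; 0], [:: 0; 69; 70; 19; 71; 37; 38; 22]);
  ([:: 9; 19; 12; 11; 2; 0], [:: 0; 19; 38; 13; 22; 39]);
  ([:: 12; 2; 19; 0; 11], [:: 0; 73; 35; 13; 40; 38; 7]);
  ([:: 19; 2; 11; 0], [:: 0; 74; 71; 19; 7; 41]);
  ([:: 13; 17; 18; 2], [:: 0; 6; 42]);
  ([:: 2; 0], [:: 0; 67; 72; 75; 60; 7; 76; 38; 13; 39; 43; 22]);
  ([:: 11; 18; 0; 12; 3], [:: 0; 60; 7; 38; 13; 44; 36; 22]);
  ([:: 12; 3; 0; 18], [:: 0; 78; 21; 68; 4]);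
  ([:: 10; 18; 13; 0], [:: 0; 21; 68; 6; 45]);
  ([:: 18; 3; 0], [:: 0; 79; 80; 60; 6; 7; 46; 36; 13]);
  ([:: 13; 0; 19], [:: 0; 3; 71; 35; 19]);
  ([:: 9; 19; 12; 11], [:: 0; 19; 38; 22; 13; 36]);
  ([:: 11; 19; 0; 12; 3], [:: 0; 83; 35; 13; 47; 48; 7]);
  ([:: 0], [:: 0; 77; 81; 82; 84; 4; 19; 37; 48; 22]);
  ([:: 10; 19; 12], [:: 0; 85; 4; 19; 49; 50; 22]);
  ([:: 28; 8; 12; 11], [:: 0; 33; 38; 13]);
  ([:: 12; 19], [:: 0; 86; 83; 87; 7; 40; 34; 13]);
  ([:: 17; 13; 11; 24], [:: 0; 6; 7; 36]);
  ([:: 16; 19; 24], [:: 0; 34; 19; 51; 36; 22]);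
  ([:: 19], [:: 0; 88; 3; 90; 89; 6; 52; 36; 19]);
  ([:: 10; 13], [:: 0; 91; 21; 6; 68; 1]);
  ([:: 16; 8; 11], [:: 0; 91; 34; 11; 13]);
  ([:: 17; 13; 11], [:: 0; 85; 91; 7; 6; 89; 53; 13]);
  ([:: 13], [:: 0; 91; 92; 94; 93; 11; 13; 22; 54]);
  ([:: 16; 9; 11], [:: 0; 91; 11; 22; 13; 54]);
  ([:: 9; 11], [:: 0; 95; 96; 7; 38; 13; 22; 36]);
  ([:: 11], [:: 0; 95; 97; 87; 93; 7]);
  ([:: ], [:: 0; 85; 91; 95; 98; 4; 68; 55])].
Lemma tc_ok0 : tc_ok 0 tc0_inputs tc0_proof. Proof. vm_compute. reflexivity. Qed.
Lemma tc_ok1 : tc_ok 1 tc1_inputs tc1_proof. Proof. vm_compute. reflexivity. Qed.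
Lemma tc_ok2 : tc_ok 2 tc2_inputs tc2_proof. Proof. vm_compute. reflexivity. Qed.
Lemma tc_ok3 : tc_ok 3 tc3_inputs tc3_proof. Proof. vm_compute. reflexivity. Qed.

Lemma tc2 (R : realFieldType) (f : 'I_4 -> 'I_4 -> R) (v0 : 'I_4) :
  (forall u v, 0 <= f u v) -> (forall u, \sum_v f u v = 1) -> (forall v, \sum_u f u v = 1) ->
  0 < f ord0 v0 -> exists s : {perm 'I_4}, s ord0 = v0 /\ forall i, 0 < f i (s i).
Proof.
move=> f0 Hr Hc Hp.
case H: [exists s : P4, (s ord0 == v0) && [forall i, 0 < f i (s i)]].
  by case/existsP: H => s /andP [/eqP ? /forallP ?]; exists s.
have Hno : ~~ [exists s : P4, (s ord0 == v0) && [forall i, 0 < f i (s i)]] by rewrite H.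
exfalso; case: v0 Hp Hno {H} => [[|[|[|[|v]]]] hv] Hp Hno.
- exact: (tc_sound_gen f0 Hr Hc Hp Hno tc_ok0).
- exact: (tc_sound_gen f0 Hr Hc Hp Hno tc_ok1).
- exact: (tc_sound_gen f0 Hr Hc Hp Hno tc_ok2).
- exact: (tc_sound_gen f0 Hr Hc Hp Hno tc_ok3).
- by [].
Qed.
Definition relab (g : 'I_4 -> {perm 'I_4}) (a : idx 4 4) : idx 4 4 := [ffun k => g k (a k)].

Lemma relab_inj g : injective (relab g).
Proof.
move=> a b /ffunP E; apply/ffunP => k; move: (E k); rewrite !ffunE; exact: perm_inj.
Qed.

Lemma relab_upd g a k t : relab g (upd a k t) = upd (relab g a) k (g k t).
Proof. by apply/ffunP => i; rewrite !ffunE; case: eqP => [->|]. Qed.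

Lemma relab_poly (R : realFieldType) (A : mdmatrix R 4 4) g :
  polystochastic A -> polystochastic (fun a => A (relab g a)).
Proof.
case=> A0 Al; split => [a|k a]; first exact: A0.
rewrite sum_line (eq_bigr (fun t => A (upd (relab g a) k (g k t)))); last first.
  by move=> t _; rewrite relab_upd.
have -> : \sum_t A (upd (relab g a) k (g k t)) = \sum_t A (upd (relab g a) k t).
  by symmetry; apply: (reindex_inj (@perm_inj _ (g k))).
by rewrite -sum_line Al.
Qed.

Lemma relab_pdb (R : realFieldType) (A : mdmatrix R 4 4) g :
  pdb (fun a => A (relab g a)) -> pdb A.
Proof.
case/existsP => p /andP [/andP [Hc Hd] Hpos]; apply/existsP; exists (relab g @: p).
apply/andP; split; last first.
  by apply/forallP => a; apply/implyP => /imsetP [x xp ->]; move/forallP: Hpos => /(_ x); rewrite xp.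
apply/andP; split; first by rewrite card_imset //; exact: relab_inj.
apply/forallP => a; apply/implyP => /imsetP [x xp ->].
apply/forallP => b; apply/implyP => /imsetP [y yp ->].
apply/implyP => ne.
have nxy : x != y by apply: contra ne => /eqP ->.
move/forallP: Hd => /(_ x); rewrite xp /= => /forallP /(_ y); rewrite yp /= => /implyP /(_ nxy).
move/forallP => H; apply/forallP => j; rewrite !ffunE (inj_eq perm_inj); exact: H.
Qed.

Lemma pdb_per (R : realFieldType) (A : mdmatrix R 4 4) :
  polystochastic A -> pdb A -> 0 < per A.
Proof.
case=> A0 _ /existsP [p /andP [Hd /forallP Hpos]].
rewrite /per (bigD1 p) //=.
apply: (lt_le_trans (y := \prod_(a in p) A a)).
  by apply: prodr_gt0 => a ap; move: (Hpos a); rewrite ap.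
rewrite lerDl; apply: sumr_ge0 => q _; apply: prodr_ge0 => a _; exact: A0.
Qed.

Definition b0 : idx 4 4 := [ffun _ => ord0].
Definition c1 : 'I_4 := @Ordinal 4 1 isT.
Definition c2 : 'I_4 := @Ordinal 4 2 isT.
Definition c3 : 'I_4 := @Ordinal 4 3 isT.

Lemma upd_eval (a : idx 4 4) k t : upd a k t k = t.
Proof. by rewrite ffunE eqxx. Qed.
Lemma upd_upd (a : idx 4 4) k t t' : upd (upd a k t) k t' = upd a k t'.
Proof. by apply/ffunP => i; rewrite !ffunE; case: eqP. Qed.
Lemma upd_b0 k : upd b0 k ord0 = b0.
Proof. by apply/ffunP => i; rewrite !ffunE; case: eqP. Qed.

Definition g1 (k0 : 'I_4) (s : {perm 'I_4}) := fun k => if k == k0 then s else 1%g.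
Lemma relab1 k0 s a : relab (g1 k0 s) a = upd a k0 (s (a k0)).
Proof. by apply/ffunP => k; rewrite !ffunE /g1; case: eqP => [->|] //; rewrite perm1. Qed.

Lemma step (R : realFieldType) (A : mdmatrix R 4 4) (j k : 'I_4) (v0 : 'I_4) :
  j != k -> polystochastic A -> 0 < A (upd (upd b0 j ord0) k v0) ->
  exists s : {perm 'I_4}, s ord0 = v0 /\ forall i, 0 < A (upd (upd b0 j i) k (s i)).
Proof.
move=> ne [A0 Al] Hp.
apply: (tc2 (f := fun u v => A (upd (upd b0 j u) k v))) => //.
- by move=> u; rewrite -sum_line Al.
- move=> v; rewrite (eq_bigr (fun u => A (upd (upd b0 k v) j u))) => [|u _].
    by rewrite -sum_line Al.
  by rewrite upd_comm.
Qed.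

Lemma dec1 (i : 'I_4) : decode [:: nat_of_ord i; nat_of_ord i; 0; 0]%N = upd (upd b0 ord0 i) c1 i.
Proof.
apply/ffunP => k; rewrite !ffunE; case: k => [[|[|[|[|k]]]] hk] //=; rewrite ?inord_val //.
by apply/val_inj; rewrite /= inordK.
by apply/val_inj; rewrite /= inordK.
Qed.
Lemma dec2 (i : 'I_4) : decode [:: 0; nat_of_ord i; nat_of_ord i; 0]%N = upd (upd b0 c1 i) c2 i.
Proof.
apply/ffunP => k; rewrite !ffunE; case: k => [[|[|[|[|k]]]] hk] //=; rewrite ?inord_val //.
by apply/val_inj; rewrite /= inordK.
by apply/val_inj; rewrite /= inordK.
Qed.
Lemma dec3 (i : 'I_4) : decode [:: 0; 0; nat_of_ord i; nat_of_ord i]%N = upd (upd b0 c2 i) c3 i.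
Proof.
apply/ffunP => k; rewrite !ffunE; case: k => [[|[|[|[|k]]]] hk] //=; rewrite ?inord_val //.
by apply/val_inj; rewrite /= inordK.
by apply/val_inj; rewrite /= inordK.
Qed.

Theorem theorem2 (R : realFieldType) (A : mdmatrix R 4 4) :
  polystochastic A -> 0 < per A.
Proof.
move=> HA; apply: pdb_per => //.
have [v0 Hv0] : exists v0 : 'I_4, 0 < A (upd (upd b0 ord0 ord0) c1 v0).
  apply: exists_pos4 => [t|]; first by case: HA.
  by rewrite -sum_line; case: HA.
have [s1 [_ H1]] := step (j := ord0) (k := c1) isT HA Hv0.
pose A1 := fun a => A (relab (g1 c1 s1) a).
have HA1 : polystochastic A1 by apply: relab_poly.
have E1 x : A1 x = A (upd x c1 (s1 (x c1))) by rewrite /A1 relab1.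
have P1 i : 0 < A1 (upd (upd b0 ord0 i) c1 i) by rewrite E1 upd_eval upd_upd.
have Hb1 : 0 < A1 (upd (upd b0 c1 ord0) c2 ord0).
  by move: (P1 ord0); rewrite !upd_b0.
have [s2 [s20 H2]] := step (j := c1) (k := c2) isT HA1 Hb1.
pose A2 := fun a => A1 (relab (g1 c2 s2) a).
have HA2 : polystochastic A2 by apply: relab_poly.
have E2 x : A2 x = A1 (upd x c2 (s2 (x c2))) by rewrite /A2 relab1.
have Hb2 : 0 < A2 (upd (upd b0 c2 ord0) c3 ord0).
  by rewrite !upd_b0 E2 ffunE s20 upd_b0; move: Hb1; rewrite !upd_b0.
have [s3 [s30 H3]] := step (j := c2) (k := c3) isT HA2 Hb2.
pose A3 := fun a => A2 (relab (g1 c3 s3) a).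
have HA3 : polystochastic A3 by apply: relab_poly.
have E3 x : A3 x = A2 (upd x c3 (s3 (x c3))) by rewrite /A3 relab1.
apply: (relab_pdb (g := g1 c1 s1)); rewrite -/A1.
apply: (relab_pdb (g := g1 c2 s2)); rewrite -/A2.
apply: (relab_pdb (g := g1 c3 s3)); rewrite -/A3.
apply: key => // c; rewrite /units => /flattenP [l /mapP [i0 hi0 ->] Hc].
have hi : (i0 < 4)%N by move: hi0; rewrite mem_iota.
pose i := Ordinal hi.
move: Hc; have -> : i0 = nat_of_ord i by [].
rewrite !inE => /or3P [] /eqP ->.
- rewrite dec1; set x := upd (upd b0 ord0 i) c1 i.
  have X3 : x c3 = ord0 by rewrite !ffunE.
  have X2 : x c2 = ord0 by rewrite !ffunE.
  by rewrite E3 X3 s30 -{1}X3 upd_same E2 X2 s20 -{1}X2 upd_same; apply: P1.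
- rewrite dec2; set x := upd (upd b0 c1 i) c2 i.
  have X3 : x c3 = ord0 by rewrite !ffunE.
  by rewrite E3 X3 s30 -{1}X3 upd_same E2 upd_eval upd_upd; apply: H2.
- rewrite dec3; set x := upd (upd b0 c2 i) c3 i.
  by rewrite E3 upd_eval upd_upd; apply: H3.
Qed.
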